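(* Let $\xi_m>0$, $\lambda>0$, $\mu\in(0,\xi_m]$. (i) For any $u_0>0$ define $$u_{n+1}=\frac{\lambda}{\xi_m}u_n\Big(\sqrt{\xi_m^2+u_n^2}-\sqrt{\mu^2+u_n^2}+\mu\ln\frac{\mu+\sqrt{\mu^2+u_n^2}}{u_n}\Big),\quad n\ge0 .$$ Then $(u_n)$ is monotone and converges to a positive limit $u_*$, which is the unique positive solution $\Delta_0$ of the zero-temperature equation $\frac{\xi_m}{\lambda}=\sqrt{\xi_m^2+\Delta_0^2}-\sqrt{\mu^2+\Delta_0^2}+\mu\ln\frac{\mu+\sqrt{\mu^2+\Delta_0^2}}{\Delta_0}$. (ii) For $T>0$ and any $u_0>0$ define $$u_{n+1}=\frac{\lambda}{\xi_m}u_n\Big(2T\ln\frac{\cosh(\sqrt{\xi_m^2+u_n^2}/2T)}{\cosh(\sqrt{\mu^2+u_n^2}/2T)}+\mu\int_0^{\mu}\tanh\Big(\frac{\sqrt{\xi^2+u_n^2}}{2T}\Big)\frac{d\xi}{\sqrt{\xi^2+u_n^2}}\Big),\quad n\ge0 .$$ Then $(u_n)$ is monotone and converges to a limit $u_*\ge0$. If $0<T<T_c$, $u_*>0$ is the unique positive solution $\Delta$ of the finite-temperature gap equation $$\frac{\xi_m}{\lambda}=2T\ln\frac{\cosh(\sqrt{\xi_m^2+\Delta^2}/2T)}{\cosh(\sqrt{\mu^2+\Delta^2}/2T)}+\mu\int_0^{\mu}\tanh\Big(\frac{\sqrt{\xi^2+\Delta^2}}{2T}\Big)\frac{d\xi}{\sqrt{\xi^2+\Delta^2}};$$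 if $T\ge T_c$, then $u_*=0$ (and this gap equation has no positive solution). (iii) For any $\tau_0>0$ define $$\tau_{n+1}=\frac{\lambda}{\xi_m}\tau_n\Big(2\tau_n\ln\frac{\cosh(\xi_m/2\tau_n)}{\cosh(\mu/2\tau_n)}+\mu\int_0^{\mu}\frac1\xi\tanh\Big(\frac{\xi}{2\tau_n}\Big)d\xi\Big),\quad n\ge0 .$$ Then $(\tau_n)$ is monotone and converges to $T_c$. In each case where the limit is positive (case (i), case (ii) with $T<T_c$, case (iii)), the convergence is linear: $\lim_{n\to\infty}\frac{u_{n+1}-u_*}{u_n-u_*}$ (resp. with $\tau$) exists and lies in $(0,1)$ (when $u_n\neq u_*$ for all $n$).
   Context: $T_c=T_c(\mu,\lambda)>0$ denotes the unique positive solution $T$ of $\frac{\xi_m}{\lambda}=2T\ln\frac{\cosh(\xi_m/2T)}{\cosh(\mu/2T)}+\mu\int_0^{\mu}\frac1\xi\tanh\big(\frac{\xi}{2T}\big)d\xi$. *)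

(* Defs.v *)
From Stdlib Require Import Reals Lra ClassicalEpsilon.
Open Scope R_scope.

(* Definite Riemann integral of f over [a,b] (the common value of RiemannInt
   for any integrability proof; arbitrary if f is not Riemann integrable). *)
Definition Rint (f : R -> R) (a b : R) : R :=
  epsilon (inhabits 0)
    (fun I => exists pr : Riemann_integrable f a b, RiemannInt pr = I).

Definition F0 (xm mu D : R) : R :=
  sqrt (xm^2 + D^2) - sqrt (mu^2 + D^2)
  + mu * ln ((mu + sqrt (mu^2 + D^2)) / D).

Definition FT (xm mu T D : R) : R :=
  2 * T * ln (cosh (sqrt (xm^2 + D^2) / (2 * T)) / cosh (sqrt (mu^2 + D^2) / (2 * T)))
  + mu * Rint (fun xi => tanh (sqrt (xi^2 + D^2) / (2 * T)) / sqrt (xi^2 + D^2)) 0 mu.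

(* Right-hand side of the critical-temperature equation (Delta = 0). *)
Definition Fc (xm mu T : R) : R :=
  2 * T * ln (cosh (xm / (2 * T)) / cosh (mu / (2 * T)))
  + mu * Rint (fun xi => / xi * tanh (xi / (2 * T))) 0 mu.

Definition is_Tc (xm lam mu Tc : R) : Prop :=
  0 < Tc /\ xm / lam = Fc xm mu Tc /\
  (forall T, 0 < T -> xm / lam = Fc xm mu T -> T = Tc).

Definition monotone (u : nat -> R) : Prop := Un_growing u \/ Un_decreasing u.

Definition linear_conv (u : nat -> R) (us : R) : Prop :=
  (forall n, u n <> us) ->
  exists L, 0 < L < 1 /\ Un_cv (fun n => (u (S n) - us) / (u n - us)) L.

(* Main.v *)
From Coquelicot Require Import Coquelicot.
From Stdlib Require Import Reals Lra Lia Ranalysis5 ClassicalEpsilon.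
Require Import Defs.
Open Scope R_scope.

Lemma D_id x : is_derive (fun x => x) x 1.
Proof. apply is_derive_Reals. apply derivable_pt_lim_id. Qed.
Lemma D_const c x : is_derive (fun _ => c) x 0.
Proof. apply is_derive_Reals. apply derivable_pt_lim_const. Qed.
Lemma D_add (f g : R -> R) (x a b : R) : is_derive f x a -> is_derive g x b -> is_derive (fun x => f x + g x) x (a + b).
Proof. intros H1 H2. apply is_derive_Reals in H1, H2. apply is_derive_Reals.
  apply (derivable_pt_lim_plus f g x a b H1 H2). Qed.
Lemma D_sub (f g : R -> R) (x a b : R) : is_derive f x a -> is_derive g x b -> is_derive (fun x => f x - g x) x (a - b).
Proof. intros H1 H2. apply is_derive_Reals in H1, H2. apply is_derive_Reals.
  apply (derivable_pt_lim_minus f g x a b H1 H2). Qed.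
Lemma D_mul (f g : R -> R) (x a b : R) : is_derive f x a -> is_derive g x b -> is_derive (fun x => f x * g x) x (a * g x + f x * b).
Proof. intros H1 H2. apply is_derive_Reals in H1, H2. apply is_derive_Reals.
  replace (a * g x + f x * b) with (a * g x + f x * b) by ring.
  pose proof (derivable_pt_lim_mult f g x a b H1 H2) as H. unfold mult_fct in H.
  replace (a * g x + f x * b) with (a * g x + f x * b) by ring. 
  eapply derivable_pt_lim_ext with (f := (f * g)%F). intro; reflexivity.
  replace (a * g x + f x * b) with (a * g x + f x * b) by ring. exact H. Qed.
Lemma D_comp (f g : R -> R) (x a b : R) : is_derive g x b -> is_derive f (g x) a -> is_derive (fun x => f (g x)) x (a * b).
Proof. intros H1 H2. apply is_derive_Reals in H1, H2. apply is_derive_Reals.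
  exact (derivable_pt_lim_comp g f x b a H1 H2). Qed.
Lemma D_inv (f : R -> R) (x a : R) : is_derive f x a -> f x <> 0 -> is_derive (fun x => / f x) x (- a / (f x)^2).
Proof. intros H1 H2. apply is_derive_Reals in H1. apply is_derive_Reals.
  replace (- a / (f x)^2) with ((0 * f x - a * fct_cte 1 x) / Rsqr (f x)) by (unfold Rsqr, fct_cte; field; auto).
  apply (derivable_pt_lim_ext (fct_cte 1 / f)%F). intro; unfold div_fct, fct_cte; unfold Rdiv; ring.
  apply (derivable_pt_lim_div (fct_cte 1) f x 0 a). apply derivable_pt_lim_const. exact H1. exact H2. Qed.
Lemma D_sqrt x : 0 < x -> is_derive sqrt x (/ (2 * sqrt x)).
Proof. intro. apply is_derive_Reals. apply derivable_pt_lim_sqrt. auto. Qed.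
Lemma D_ln x : 0 < x -> is_derive ln x (/ x).
Proof. intro. apply is_derive_Reals. apply derivable_pt_lim_ln. auto. Qed.
Lemma D_ext (f g : R -> R) (x a : R) : (forall y, f y = g y) -> is_derive f x a -> is_derive g x a.
Proof. intros E H. apply (is_derive_ext f g); auto. Qed.
Lemma D_eq (f : R -> R) (x a b : R) : a = b -> is_derive f x a -> is_derive f x b.
Proof. intros ->; auto. Qed.
Lemma D_scal (c : R) (f : R -> R) (x a : R) : is_derive f x a -> is_derive (fun x => c * f x) x (c * a).
Proof. intro H. apply (D_eq _ _ (0 * f x + c * a)). ring. apply (D_mul (fun _ => c) f). apply D_const. auto. Qed.
Lemma D_opp (f : R -> R) (x a : R) : is_derive f x a -> is_derive (fun x => - f x) x (- a).
Proof. intro H. apply (D_ext (fun x => -1 * f x)). intro; ring. apply (D_eq _ _ (-1 * a)). ring. apply D_scal; auto. Qed.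
Lemma D_cont (f : R -> R) (x a : R) : is_derive f x a -> continuity_pt f x.
Proof. intros H. apply is_derive_Reals in H. apply derivable_continuous_pt.
  exists a. exact H. Qed.

Lemma nondecr_deriv (f df : R -> R) a b : a <= b ->
  (forall x, a <= x <= b -> is_derive f x (df x)) ->
  (forall x, a <= x <= b -> 0 <= df x) -> f a <= f b.
Proof.
  intros Hab Hd Hp. destruct (MVT_gen f a b df) as [c [Hc E]].
  - intros x Hx. apply Hd. rewrite Rmin_left in Hx by lra. rewrite Rmax_right in Hx by lra. lra.
  - intros x Hx. apply (D_cont _ _ (df x)). apply Hd. rewrite Rmin_left in Hx by lra. rewrite Rmax_right in Hx by lra. lra.
  - rewrite Rmin_left in Hc by lra. rewrite Rmax_right in Hc by lra.
    specialize (Hp c Hc). assert (0 <= df c * (b - a)) by (apply Rmult_le_pos; lra). lra.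
Qed.

Lemma incr_deriv (f df : R -> R) a b : a < b ->
  (forall x, a <= x <= b -> is_derive f x (df x)) ->
  (forall x, a < x <= b -> 0 < df x) ->
  (forall x, a <= x <= b -> 0 <= df x) -> f a < f b.
Proof.
  intros Hab Hd Hp Hp0. set (m := (a + b) / 2).
  assert (f a <= f m) by (apply nondecr_deriv with df; unfold m in *; [lra| intros; apply Hd; lra | intros; apply Hp0; lra]).
  destruct (MVT_gen f m b df) as [c [Hc E]].
  - intros x Hx. apply Hd. unfold m in *. rewrite Rmin_left in Hx by lra. rewrite Rmax_right in Hx by lra. lra.
  - intros x Hx. apply (D_cont _ _ (df x)). apply Hd. unfold m in *. rewrite Rmin_left in Hx by lra. rewrite Rmax_right in Hx by lra. lra.
  - unfold m in *. rewrite Rmin_left in Hc by lra. rewrite Rmax_right in Hc by lra.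
    assert (0 < df c) by (apply Hp; lra).
    assert (0 < df c * (b - (a+b)/2)) by (apply Rmult_lt_0_compat; lra). fold m in E. unfold m in E. lra.
Qed.

Lemma cosh_pos x : 0 < cosh x.
Proof. unfold cosh. pose proof (exp_pos x). pose proof (exp_pos (-x)). lra. Qed.

Lemma exp_opp_inv x : exp (- x) = / exp x.
Proof. rewrite exp_Ropp. reflexivity. Qed.

Lemma cosh_ge1 x : 1 <= cosh x.
Proof. unfold cosh. rewrite exp_opp_inv. pose proof (exp_pos x).
  assert (exp x + / exp x - 2 = (exp x - 1)^2 / exp x) by (field; lra).
  assert (0 <= (exp x - 1)^2 / exp x).
  { apply Rdiv_le_0_compat. apply pow2_ge_0. lra. } lra. Qed.

Lemma cosh_gt1 x : x <> 0 -> 1 < cosh x.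
Proof. intro Hx. unfold cosh. rewrite exp_opp_inv. pose proof (exp_pos x).
  assert (exp x + / exp x - 2 = (exp x - 1)^2 / exp x) by (field; lra).
  assert (exp x <> 1).
  { intro E. apply Hx. rewrite <- exp_0 in E. apply exp_inv in E. exact E. }
  assert (0 < (exp x - 1)^2 / exp x).
  { apply Rdiv_lt_0_compat. assert (exp x - 1 <> 0) by lra.
    apply pow2_gt_0; auto. lra. } lra. Qed.

Lemma cosh_sinh x : cosh x ^ 2 - sinh x ^ 2 = 1.
Proof. unfold cosh, sinh. rewrite exp_opp_inv. pose proof (exp_pos x). field. lra. Qed.

Lemma sinh_pos x : 0 < x -> 0 < sinh x.
Proof. intro. unfold sinh. assert (exp (-x) < exp x) by (apply exp_increasing; lra). lra. Qed.

Lemma sinh_nonneg x : 0 <= x -> 0 <= sinh x.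
Proof. intro. destruct (Req_dec x 0). subst. unfold sinh. rewrite Ropp_0. lra.
  left; apply sinh_pos; lra. Qed.

Lemma is_derive_tanh x : is_derive tanh x (/ (cosh x)^2).
Proof.
  apply is_derive_Reals. unfold tanh.
  pose proof (cosh_pos x).
  replace (/ cosh x ^ 2) with ((cosh x * cosh x - sinh x * sinh x) / Rsqr (cosh x)).
  2:{ pose proof (cosh_sinh x). unfold Rsqr. field_simplify; try lra. rewrite <- H0. field. lra. }
  change (derivable_pt_lim (sinh / cosh)%F x ((cosh x * cosh x - sinh x * sinh x) / Rsqr (cosh x))).
  apply (derivable_pt_lim_div sinh cosh). apply derivable_pt_lim_sinh.
  apply derivable_pt_lim_cosh. lra.
Qed.

Lemma tanh_0 : tanh 0 = 0.
Proof. unfold tanh, sinh. rewrite Ropp_0. unfold Rdiv. ring. Qed.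

Lemma tanh_pos x : 0 < x -> 0 < tanh x.
Proof. intro. unfold tanh. apply Rdiv_lt_0_compat. apply sinh_pos; auto. apply cosh_pos. Qed.

Lemma tanh_nonneg x : 0 <= x -> 0 <= tanh x.
Proof. intro. unfold tanh. apply Rdiv_le_0_compat. apply sinh_nonneg; auto. apply cosh_pos. Qed.

Lemma tanh_lt1 x : tanh x < 1.
Proof. pose proof (cosh_pos x).
  assert (E : tanh x = 1 + (sinh x - cosh x) * / cosh x) by (unfold tanh; field; lra).
  assert (sinh x - cosh x < 0) by (unfold sinh, cosh; pose proof (exp_pos (-x)); lra).
  assert (0 < / cosh x) by (apply Rinv_0_lt_compat; lra).
  assert ((sinh x - cosh x) * / cosh x < 0).
  { apply Ropp_lt_cancel. rewrite Ropp_0, Ropp_mult_distr_l. apply Rmult_lt_0_compat; lra. }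
  lra. Qed.

Lemma tanh_incr x y : x < y -> tanh x < tanh y.
Proof.
  intros. apply (incr_function tanh m_infty p_infty (fun x => / (cosh x)^2)); auto.
  - intros; apply is_derive_tanh.
  - intros. apply Rinv_0_lt_compat. pose proof (cosh_pos x0). apply pow_lt; lra.
  - simpl; auto. - simpl; auto.
Qed.

Lemma tanh_lt_id x : 0 < x -> tanh x < x.
Proof.
  intro. assert (H1 : 0 - tanh 0 < x - tanh x).
  2:{ rewrite tanh_0 in H1. lra. }
  apply (incr_deriv (fun x => x - tanh x) (fun x => 1 - / (cosh x)^2)). lra.
  - intros. apply (D_sub (fun x => x) tanh). apply D_id. apply is_derive_tanh.
  - intros y Hy. assert (1 < cosh y) by (apply cosh_gt1; lra).
    assert (1 < cosh y ^2) by nra.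
    assert (/ cosh y ^2 < 1). { rewrite <- Rinv_1. apply Rinv_lt_contravar; lra. } lra.
  - intros y Hy. assert (1 <= cosh y) by (apply cosh_ge1; lra).
    assert (1 <= cosh y ^2) by nra.
    assert (/ cosh y ^2 <= 1). { rewrite <- Rinv_1. apply Rinv_le_contravar; lra. } lra.
Qed.

Lemma sinh_gt_id x : 0 < x -> x < sinh x.
Proof.
  intro.
  assert (H2 : sinh 0 - 0 < sinh x - x).
  { apply (incr_deriv (fun x => sinh x - x) (fun x => cosh x - 1)). lra.
    - intros. apply (D_sub sinh (fun x => x)). apply is_derive_Reals, derivable_pt_lim_sinh. apply D_id.
    - intros y Hy. assert (1 < cosh y) by (apply cosh_gt1; lra). lra.
    - intros y Hy. assert (1 <= cosh y) by (apply cosh_ge1; lra). lra. }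
  unfold sinh in H2 at 1. rewrite Ropp_0 in H2. lra.
Qed.

Lemma sinh_double x : sinh (2 * x) = 2 * sinh x * cosh x.
Proof.
  unfold sinh, cosh. replace (2 * x) with (x + x) by ring.
  replace (- (x + x)) with (-x + -x) by ring. rewrite !exp_plus.
  rewrite !exp_opp_inv. pose proof (exp_pos x). field. lra.
Qed.

Lemma key_ineq s : 0 < s -> s / (cosh s)^2 < tanh s.
Proof.
  intro. pose proof (cosh_pos s).
  assert (s < sinh s * cosh s).
  { pose proof (sinh_gt_id (2*s)). rewrite sinh_double in H1. lra. }
  unfold tanh. apply (Rmult_lt_reg_r ((cosh s)^2)). nra.
  replace (s / cosh s ^ 2 * cosh s ^ 2) with s by (field; lra).
  replace (sinh s / cosh s * cosh s ^ 2) with (sinh s * cosh s) by (field; lra). lra.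
Qed.

Lemma key_ineq_le s : 0 <= s -> s / (cosh s)^2 <= tanh s.
Proof.
  intro. destruct (Req_dec s 0). subst. rewrite tanh_0. unfold Rdiv; rewrite Rmult_0_l; lra.
  left; apply key_ineq; lra.
Qed.

Definition L (y : R) := ln (cosh y).

Lemma is_derive_L y : is_derive L y (tanh y).
Proof.
  unfold L. eapply D_eq. 2:{ apply (D_comp ln cosh). apply is_derive_Reals, derivable_pt_lim_cosh.
    apply D_ln. apply cosh_pos. }
  unfold tanh. field. pose proof (cosh_pos y); lra.
Qed.

Definition k (s : R) : R := if Req_EM_T s 0 then 1 else tanh s / s.
Definition k' (s : R) : R := (s / (cosh s)^2 - tanh s) / s^2.

Lemma k_eq s : s <> 0 -> k s = tanh s / s.
Proof. intro. unfold k. destruct (Req_EM_T s 0); [contradiction|reflexivity]. Qed.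

Lemma k_derive s : s <> 0 -> is_derive k s (k' s).
Proof.
  intro Hs. apply (is_derive_ext_loc (fun s => tanh s * / s)).
  - destruct (Rlt_dec 0 s).
    + exists (mkposreal s r). intros y Hy. simpl in Hy. unfold ball in Hy; simpl in Hy.
      unfold AbsRing_ball, abs, minus, plus, opp in Hy; simpl in Hy.
      rewrite k_eq. reflexivity. apply Rabs_def2 in Hy. lra.
    + assert (0 < -s) by (apply Rnot_lt_le in n; lra).
      exists (mkposreal (-s) H). intros y Hy. simpl in Hy. unfold ball in Hy; simpl in Hy.
      unfold AbsRing_ball, abs, minus, plus, opp in Hy; simpl in Hy.
      rewrite k_eq. reflexivity. apply Rabs_def2 in Hy. lra.
  - eapply D_eq. 2:{ apply (D_mul tanh (fun s => / s)). apply is_derive_tanh. apply D_inv. apply D_id. auto. }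
    unfold k'. field. split; auto. pose proof (cosh_pos s); lra.
Qed.

Lemma k_cont0 : continuity_pt k 0.
Proof.
  pose proof (is_derive_tanh 0) as H. apply is_derive_Reals in H.
  rewrite cosh_0 in H. replace (/ 1 ^ 2) with 1 in H by field.
  intros e He. destruct (H e He) as [d Hd]. exists d. split. apply cond_pos.
  intros x [Hx1 Hx2]. simpl in *. unfold R_dist in *.
  destruct (Req_dec x 0) as [E|E].
  - subst. rewrite Rminus_diag, Rabs_R0. auto.
  - rewrite (k_eq x E). unfold k. destruct (Req_EM_T 0 0); [|contradiction].
    specialize (Hd x E). rewrite Rminus_0_r in Hx2. specialize (Hd Hx2).
    rewrite Rplus_0_l, tanh_0, Rminus_0_r in Hd. exact Hd.
Qed.

Lemma k_cont s : continuity_pt k s.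
Proof.
  destruct (Req_dec s 0). subst; apply k_cont0.
  apply (D_cont _ _ (k' s)). apply k_derive; auto.
Qed.

Lemma k'_neg s : 0 < s -> k' s < 0.
Proof.
  intro. unfold k'. pose proof (key_ineq s H). unfold Rdiv at 1.
  assert (0 < / s^2) by (apply Rinv_0_lt_compat; nra).
  assert (s / cosh s ^ 2 - tanh s < 0) by lra.
  apply Ropp_lt_cancel. rewrite Ropp_0, Ropp_mult_distr_l. apply Rmult_lt_0_compat; lra.
Qed.

Lemma k_plus s : s <> 0 -> k s + s * k' s = / (cosh s)^2.
Proof. intro. rewrite k_eq by auto. unfold k'. field. split; auto. pose proof (cosh_pos s); lra. Qed.

Lemma k_pos s : 0 <= s -> 0 < k s.
Proof.
  intro. destruct (Req_dec s 0). subst. unfold k. destruct (Req_EM_T 0 0); [lra|contradiction].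
  rewrite k_eq by auto. apply Rdiv_lt_0_compat. apply tanh_pos; lra. lra.
Qed.

Lemma k_tanh s : s <> 0 -> s * k s = tanh s.
Proof. intro. rewrite k_eq by auto. field. auto. Qed.

Lemma k_decr a b : 0 <= a -> a < b -> k b < k a.
Proof.
  intros Ha Hab. destruct (Req_dec a 0).
  - subst. unfold k at 2. destruct (Req_EM_T 0 0); [|contradiction].
    rewrite k_eq by lra. pose proof (tanh_lt_id b Hab).
    apply (Rmult_lt_reg_r b). lra. field_simplify; lra.
  - assert (- k a < - k b); [|lra].
    apply (incr_deriv (fun s => - k s) (fun s => - k' s)). lra.
    + intros. apply D_opp. apply k_derive; lra.
    + intros. pose proof (k'_neg x). lra.
    + intros. pose proof (k'_neg x). lra.
Qed.

Lemma k'_cont s : s <> 0 -> continuity_pt k' s.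
Proof.
  intro. unfold k'.
  apply continuity_pt_div.
  - apply continuity_pt_minus. apply continuity_pt_div. apply continuity_pt_id.
    apply continuity_pt_mult. apply derivable_continuous_pt, derivable_pt_cosh.
    apply continuity_pt_mult. apply derivable_continuous_pt, derivable_pt_cosh. apply continuity_pt_const; intro; auto.
    pose proof (cosh_pos s); simpl; nra.
    apply (D_cont _ _ _ (is_derive_tanh s)).
  - apply continuity_pt_mult. apply continuity_pt_id. apply continuity_pt_mult. apply continuity_pt_id. apply continuity_pt_const; intro; auto.
  - simpl. intro E. apply H. nra.
Qed.

Lemma cv_shift (u : nat -> R) l : Un_cv u l -> Un_cv (fun n => u (S n)) l.
Proof.
  intros H e He. destruct (H e He) as [N HN]. exists N. intros n Hn.
  apply HN. lia.
Qed.

Lemma iter_conv (g : R -> R) (p : R) (u : nat -> R) :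
 0 < p -> 0 < u 0%nat ->
 (forall n, u (S n) = g (u n)) ->
 (forall x y, 0 < x -> x <= y -> g x <= g y) ->
 g p = p ->
 (forall x, 0 < x < p -> x < g x) ->
 (forall x, p < x -> g x < x) ->
 (forall x, 0 < x -> continuity_pt g x) ->
 monotone u /\ Un_cv u p.
Proof.
  intros Hp Hu0 Hrec Hmono Hfix Hlt Hgt Hcont.
  destruct (Rle_lt_dec (u 0%nat) p) as [Hle|Hlt0].
  - assert (Hin : forall n, u 0%nat <= u n <= p /\ u n <= u (S n)).
    { induction n.
      - split. lra. rewrite Hrec. destruct (Req_dec (u 0%nat) p) as [E|E].
        + rewrite E, Hfix; lra.
        + left; apply Hlt; lra.
      - destruct IHn as [[H1 H2] H3]. split. split. lra.
        rewrite Hrec. rewrite <- Hfix. apply Hmono; lra.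
        rewrite (Hrec (S n)). destruct (Req_dec (u (S n)) p) as [E|E].
        + rewrite E, Hfix; lra.
        + assert (u (S n) <= p). { rewrite Hrec, <- Hfix. apply Hmono; lra. }
          left; apply Hlt; lra. }
    assert (Hg : Un_growing u) by (intro n; apply Hin).
    destruct (growing_cv u Hg) as [L HL].
    { exists p. intros x [n Hn]. subst. apply Hin. }
    split. left; exact Hg.
    assert (HL1 : u 0%nat <= L) by (apply (Rle_cv_lim (Un:=fun _ => u 0%nat) (Vn:=u)); [intro n; apply Hin| intros e He; exists 0%nat; intros; rewrite R_dist_eq; lra | exact HL]).
    assert (HL2 : L <= p) by (apply (Rle_cv_lim (Un:=u) (Vn:=fun _ => p)); [intro n; apply Hin| exact HL | intros e He; exists 0%nat; intros; rewrite R_dist_eq; lra]).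
    assert (gL : g L = L).
    { apply (UL_sequence (fun n => u (S n))).
      - apply (Un_cv_ext (fun n => g (u n))). intro; symmetry; apply Hrec.
        apply continuity_seq; [apply Hcont; lra|exact HL].
      - apply cv_shift; exact HL. }
    destruct (Req_dec L p) as [E|E]. subst; exact HL.
    exfalso. assert (L < g L) by (apply Hlt; lra). lra.
  - assert (Hin : forall n, p <= u n <= u 0%nat /\ u (S n) <= u n).
    { induction n.
      - split. lra. rewrite Hrec. left; apply Hgt; lra.
      - destruct IHn as [[H1 H2] H3]. split. split.
        rewrite Hrec. rewrite <- Hfix. apply Hmono; lra. lra.
        rewrite (Hrec (S n)). destruct (Req_dec (u (S n)) p) as [E|E].
        + rewrite E, Hfix; lra.
        + assert (p <= u (S n)). { rewrite Hrec, <- Hfix. apply Hmono; lra. }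
          left; apply Hgt; lra. }
    assert (Hg : Un_decreasing u) by (intro n; apply Hin).
    destruct (decreasing_cv u Hg) as [L HL].
    { exists (-p). intros x [n Hn]. subst. unfold opp_seq. pose proof (Hin n). lra. }
    split. right; exact Hg.
    assert (HL2 : p <= L) by (apply (Rle_cv_lim (Un:=fun _ => p) (Vn:=u)); [intro n; apply Hin| intros e He; exists 0%nat; intros; rewrite R_dist_eq; lra | exact HL]).
    assert (gL : g L = L).
    { apply (UL_sequence (fun n => u (S n))).
      - apply (Un_cv_ext (fun n => g (u n))). intro; symmetry; apply Hrec.
        apply continuity_seq; [apply Hcont; lra|exact HL].
      - apply cv_shift; exact HL. }
    destruct (Req_dec L p) as [E|E]. subst; exact HL.
    exfalso. assert (g L < L) by (apply Hgt; lra). lra.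
Qed.

Lemma iter_zero (g : R -> R) (u : nat -> R) :
 0 < u 0%nat ->
 (forall n, u (S n) = g (u n)) ->
 (forall x, 0 < x -> 0 < g x < x) ->
 (forall x, 0 < x -> continuity_pt g x) ->
 monotone u /\ Un_cv u 0.
Proof.
  intros Hu0 Hrec Hg Hcont.
  assert (Hin : forall n, 0 < u n /\ u (S n) <= u n).
  { induction n.
    - split. lra. rewrite Hrec. left; apply Hg; lra.
    - destruct IHn as [H1 H3].
      assert (0 < u (S n)) by (rewrite Hrec; apply Hg; lra).
      split. lra. rewrite (Hrec (S n)). left; apply Hg; lra. }
  assert (Hd : Un_decreasing u) by (intro n; apply Hin).
  destruct (decreasing_cv u Hd) as [L HL].
  { exists 0. intros x [n Hn]. subst. unfold opp_seq. pose proof (Hin n). lra. }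
  split. right; exact Hd.
  assert (HL2 : 0 <= L) by (apply (Rle_cv_lim (Un:=fun _ => 0) (Vn:=u)); [intro n; left; apply Hin| intros e He; exists 0%nat; intros; rewrite R_dist_eq; lra | exact HL]).
  destruct (Req_dec L 0) as [E|E]. subst; exact HL.
  exfalso.
  assert (gL : g L = L).
  { apply (UL_sequence (fun n => u (S n))).
    - apply (Un_cv_ext (fun n => g (u n))). intro; symmetry; apply Hrec.
      apply continuity_seq; [apply Hcont; lra|exact HL].
    - apply cv_shift; exact HL. }
  assert (g L < L) by (apply Hg; lra). lra.
Qed.

Lemma lin_conv (g : R -> R) (p d : R) (u : nat -> R) :
  Un_cv u p -> (forall n, u (S n) = g (u n)) -> g p = p ->
  derivable_pt_lim g p d -> 0 < d < 1 -> linear_conv u p.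
Proof.
  intros Hcv Hrec Hfix Hd Hd01 Hne. exists d. split. exact Hd01.
  intros e He. destruct (Hd e He) as [del Hdel].
  destruct (Hcv del (cond_pos del)) as [N HN].
  exists N. intros n Hn. unfold R_dist.
  specialize (HN n Hn). unfold R_dist in HN.
  assert (h0 : u n - p <> 0) by (specialize (Hne n); lra).
  specialize (Hdel (u n - p) h0 HN).
  replace (p + (u n - p)) with (u n) in Hdel by ring.
  rewrite Hrec. rewrite Hfix in Hdel. exact Hdel.
Qed.

Lemma cont_conv (f : R -> R) (x : R) : continuity_pt f x -> continuous f x.
Proof. intro H. apply continuity_pt_filterlim in H. exact H. Qed.

Lemma ex_RInt_cpt (f : R -> R) (a b : R) : (forall x, continuity_pt f x) -> ex_RInt f a b.
Proof. intros H. apply (@ex_RInt_continuous R_CompleteNormedModule). intros; apply cont_conv, H. Qed.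

Lemma ex_RInt_cpt' (f : R -> R) (a b : R) : a <= b -> (forall x, a <= x <= b -> continuity_pt f x) -> ex_RInt f a b.
Proof. intros Hab H. apply (@ex_RInt_continuous R_CompleteNormedModule). intros z Hz. apply cont_conv, H.
  rewrite Rmin_left, Rmax_right in Hz; lra. Qed.

Definition sq D x := sqrt (x^2 + D^2).

Lemma sq_pos D x : 0 < D -> 0 < sq D x.
Proof. intro. unfold sq. apply sqrt_lt_R0. nra. Qed.

Lemma sq_pos' D x : 0 < x -> 0 < sq D x.
Proof. intro. unfold sq. apply sqrt_lt_R0. nra. Qed.

Lemma sq_sqr D x : (sq D x)^2 = x^2 + D^2.
Proof. unfold sq. rewrite pow2_sqrt. auto. nra. Qed.

Lemma sq_geD D x : 0 <= D -> D <= sq D x.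
Proof. intro. unfold sq. rewrite <- (sqrt_pow2 D) at 1 by auto. apply sqrt_le_1_alt. nra. Qed.

Lemma sq_gex D x : 0 <= x -> x <= sq D x.
Proof. intro. unfold sq. rewrite <- (sqrt_pow2 x) at 1 by auto. apply sqrt_le_1_alt. nra. Qed.

Lemma sq_0 x : 0 <= x -> sq 0 x = x.
Proof. intro. unfold sq. replace (x^2 + 0^2) with (x^2) by ring. apply sqrt_pow2; auto. Qed.

Lemma sq_derive_D D x : 0 < D -> is_derive (fun z => sq z x) D (D / sq D x).
Proof.
  intro. unfold sq. eapply D_eq. 2:{ apply (D_comp sqrt (fun z => x^2 + z^2)).
    apply (D_add (fun _ => x^2) (fun z => z^2)). apply D_const.
    apply (D_ext (fun z => z * z)). intro; ring. apply (D_mul (fun z => z) (fun z => z)); apply D_id.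
    apply D_sqrt. nra. }
  field. apply Rgt_not_eq. apply sqrt_lt_R0; nra.
Qed.

Lemma sq_derive_x D x : 0 < x -> is_derive (fun z => sq D z) x (x / sq D x).
Proof.
  intro. unfold sq. eapply D_eq. 2:{ apply (D_comp sqrt (fun z => z^2 + D^2)).
    apply (D_add (fun z => z^2) (fun _ => D^2)).
    apply (D_ext (fun z => z * z)). intro; ring. apply (D_mul (fun z => z) (fun z => z)); apply D_id.
    apply D_const.
    apply D_sqrt. nra. }
  field. apply Rgt_not_eq. apply sqrt_lt_R0; nra.
Qed.

Lemma sq_derive_x' D x : 0 < D -> is_derive (fun z => sq D z) x (x / sq D x).
Proof.
  intro. unfold sq. eapply D_eq. 2:{ apply (D_comp sqrt (fun z => z^2 + D^2)).
    apply (D_add (fun z => z^2) (fun _ => D^2)).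
    apply (D_ext (fun z => z * z)). intro; ring. apply (D_mul (fun z => z) (fun z => z)); apply D_id.
    apply D_const.
    apply D_sqrt. nra. }
  field. apply Rgt_not_eq. apply sqrt_lt_R0; nra.
Qed.

Lemma sq_cont_x D x : continuity_pt (fun z => sq D z) x.
Proof.
  unfold sq. apply (continuity_pt_comp (fun z => z^2 + D^2) sqrt).
  apply continuity_pt_plus. apply continuity_pt_mult. apply continuity_pt_id.
  apply continuity_pt_mult. apply continuity_pt_id. apply continuity_pt_const; intro; auto.
  apply continuity_pt_const; intro; auto.
  apply continuity_pt_sqrt. nra.
Qed.

Lemma sq_cont2 D t : continuity_2d_pt (fun u v => sq u v) D t.
Proof.
  unfold sq. apply (continuity_1d_2d_pt_comp sqrt (fun u v => v^2 + u^2)).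
  apply continuity_pt_sqrt. nra.
  apply continuity_2d_pt_plus.
  apply (continuity_2d_pt_ext (fun u v => v * v)). intros; ring.
  apply continuity_2d_pt_mult; apply continuity_2d_pt_id2.
  apply (continuity_2d_pt_ext (fun u v => u * u)). intros; ring.
  apply continuity_2d_pt_mult; apply continuity_2d_pt_id1.
Qed.

Lemma RInt_lin (f g : R -> R) (c a b : R) : ex_RInt f a b -> ex_RInt g a b ->
  RInt (fun x => f x + c * g x) a b = RInt f a b + c * RInt g a b.
Proof.
  intros Hf Hg. apply is_RInt_unique.
  apply (@is_RInt_plus R_NormedModule f (fun x => c * g x) a b (RInt f a b) (c * RInt g a b)).
  apply (@RInt_correct R_CompleteNormedModule); auto.
  apply (@is_RInt_scal R_NormedModule g a b c (RInt g a b)).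
  apply (@RInt_correct R_CompleteNormedModule); auto.
Qed.

Lemma RInt_cst (a b c : R) : RInt (fun _ => c) a b = c * (b - a).
Proof. rewrite RInt_const. unfold scal; simpl. unfold mult; simpl. ring. Qed.

Lemma RInt_scal' (f : R -> R) (c a b : R) : ex_RInt f a b ->
  RInt (fun x => c * f x) a b = c * RInt f a b.
Proof.
  intros Hf. apply is_RInt_unique.
  apply (@is_RInt_scal R_NormedModule f a b c (RInt f a b)).
  apply (@RInt_correct R_CompleteNormedModule); auto.
Qed.

Lemma RInt_split (f : R -> R) (a b c : R) : ex_RInt f a b -> ex_RInt f b c ->
  RInt f a b + RInt f b c = RInt f a c.
Proof. intros H1 H2. exact (@RInt_Chasles R_CompleteNormedModule f a b c H1 H2). Qed.

Lemma RInt_deriv (f df : R -> R) (a b : R) : a <= b ->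
  (forall x, a <= x <= b -> is_derive f x (df x)) ->
  (forall x, a <= x <= b -> continuity_pt df x) ->
  RInt df a b = f b - f a.
Proof.
  intros Hab H1 H2. apply is_RInt_unique.
  apply (@is_RInt_derive R_CompleteNormedModule f df a b).
  - intros x Hx. rewrite Rmin_left, Rmax_right in Hx by lra. apply H1; auto.
  - intros x Hx. rewrite Rmin_left, Rmax_right in Hx by lra. apply cont_conv, H2; auto.
Qed.

Section GenPhi.
Variables (mu xm : R) (phi phi' Phi : R -> R).
Hypothesis Hmu : 0 < mu.
Hypothesis Hmx : mu <= xm.
Hypothesis Hd : forall y, 0 < y -> is_derive phi y (phi' y).
Hypothesis Hc' : forall y, 0 < y -> continuity_pt phi' y.
Hypothesis Hpos : forall y, 0 < y -> 0 < phi y.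
Hypothesis Hneg : forall y, 0 < y -> phi' y < 0.
Hypothesis Hyp : forall y, 0 < y -> 0 <= phi y + y * phi' y.
Hypothesis Hbd : forall y, 0 < y -> y * phi y <= 1.
Hypothesis HPhi : forall y, 0 < y -> is_derive Phi y (y * phi y).

Definition w x := (x + mu + Rabs (x - mu)) / 2.
Definition fD D x := w x * phi (sq D x).
Definition dfD D x := w x * (phi' (sq D x) * (D / sq D x)).
Definition G D := RInt (fD D) 0 xm.
Definition dG D := RInt (dfD D) 0 xm.

Lemma w_low x : x <= mu -> w x = mu.
Proof. intro. unfold w. rewrite Rabs_left1 by lra. field. Qed.
Lemma w_high x : mu <= x -> w x = x.
Proof. intro. unfold w. rewrite Rabs_right by lra. field. Qed.
Lemma w_ge x : mu <= w x.
Proof. destruct (Rle_dec x mu). rewrite w_low; lra. rewrite w_high; lra. Qed.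
Lemma w_le x : x <= xm -> w x <= xm.
Proof. intro. destruct (Rle_dec x mu). rewrite w_low; lra. rewrite w_high; lra. Qed.
Lemma w_cont x : continuity_pt w x.
Proof. unfold w. apply continuity_pt_div. apply continuity_pt_plus. apply continuity_pt_plus.
  apply continuity_pt_id. apply continuity_pt_const; intro; auto.
  apply (continuity_pt_comp (fun x => x - mu) Rabs). apply continuity_pt_minus. apply continuity_pt_id.
  apply continuity_pt_const; intro; auto. apply Rcontinuity_abs.
  apply continuity_pt_const; intro; auto. lra. Qed.

Lemma phi_cont y : 0 < y -> continuity_pt phi y.
Proof. intro. apply (D_cont _ _ (phi' y)). auto. Qed.

Lemma fD_cont D x : 0 < D -> continuity_pt (fD D) x.
Proof. intro. unfold fD. apply continuity_pt_mult. apply w_cont.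
  apply (continuity_pt_comp (fun x => sq D x) phi). apply sq_cont_x. apply phi_cont, sq_pos; auto. Qed.

Lemma fD_ex D a b : 0 < D -> ex_RInt (fD D) a b.
Proof. intro. apply ex_RInt_cpt. intro; apply fD_cont; auto. Qed.

Lemma dfD_cont D x : 0 < D -> continuity_pt (dfD D) x.
Proof. intro. unfold dfD. apply continuity_pt_mult. apply w_cont. apply continuity_pt_mult.
  apply (continuity_pt_comp (fun x => sq D x) phi'). apply sq_cont_x. apply Hc', sq_pos; auto.
  apply continuity_pt_div. apply continuity_pt_const; intro; auto. apply sq_cont_x.
  pose proof (sq_pos D x H); lra. Qed.

Lemma dfD_ex D a b : 0 < D -> ex_RInt (dfD D) a b.
Proof. intro. apply ex_RInt_cpt. intro; apply dfD_cont; auto. Qed.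

Lemma fD_derive D x : 0 < D -> is_derive (fun z => fD z x) D (dfD D x).
Proof. intro. unfold fD, dfD. apply D_scal. apply (D_eq _ _ (phi' (sq D x) * (D / sq D x))). ring.
  apply (D_comp phi (fun z => sq z x)). apply sq_derive_D; auto. apply Hd. apply sq_pos; auto. Qed.

Lemma dfD_cont2 D t : 0 < D -> continuity_2d_pt (fun u v => dfD u v) D t.
Proof.
  intro. unfold dfD. apply continuity_2d_pt_mult.
  apply (continuity_1d_2d_pt_comp w (fun u v => v)). apply w_cont. apply continuity_2d_pt_id2.
  apply continuity_2d_pt_mult.
  apply (continuity_1d_2d_pt_comp phi' (fun u v => sq u v)). apply Hc', sq_pos; auto. apply sq_cont2.
  apply continuity_2d_pt_mult. apply continuity_2d_pt_id1.
  apply continuity_2d_pt_inv. apply sq_cont2. pose proof (sq_pos D t H); lra.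
Qed.

Lemma Derive_cont2 D t : 0 < D -> continuity_2d_pt (fun u v => Derive (fun z => fD z v) u) D t.
Proof.
  intro. apply (continuity_2d_pt_ext_loc (fun u v => dfD u v)).
  - exists (mkposreal D H). intros u v Hu Hv. simpl in Hu.
    symmetry. apply is_derive_unique. apply fD_derive. apply Rabs_def2 in Hu. lra.
  - apply dfD_cont2; auto.
Qed.

Lemma locD D : 0 < D -> locally D (fun y => 0 < y).
Proof. intro. exists (mkposreal D H). intros y Hy. simpl in Hy.
  unfold ball in Hy; simpl in Hy. unfold AbsRing_ball, abs, minus, plus, opp in Hy; simpl in Hy.
  apply Rabs_def2 in Hy. lra. Qed.

Lemma G_derive D : 0 < D -> is_derive G D (dG D).
Proof.
  intro. unfold G, dG.
  assert (E : RInt (dfD D) 0 xm = RInt (fun t => Derive (fun u => fD u t) D) 0 xm).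
  { apply RInt_ext. intros. symmetry. apply is_derive_unique. apply fD_derive; auto. }
  rewrite E. apply (is_derive_RInt_param (fun u t => fD u t)).
  - apply (filter_imp (fun y => 0 < y)). intros y Hy t _. exists (dfD y t). apply fD_derive; auto.
    apply locD; auto.
  - intros. apply Derive_cont2; auto.
  - apply (filter_imp (fun y => 0 < y)). intros y Hy. apply fD_ex; auto. apply locD; auto.
Qed.

Lemma dG_neg D : 0 < D -> dG D < 0.
Proof.
  intro. unfold dG. apply (Rlt_le_trans _ (RInt (fun _ => 0) 0 xm)). 2:{ rewrite RInt_cst; lra. }
  apply RInt_lt. lra.
  - intros; apply cont_conv, continuity_pt_const; intro; auto.
  - intros; apply cont_conv, dfD_cont; auto.
  - intros x Hx. unfold dfD. pose proof (sq_pos D x H). pose proof (w_ge x).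
    pose proof (Hneg _ H0). assert (0 < D / sq D x) by (apply Rdiv_lt_0_compat; lra).
    assert (phi' (sq D x) * (D / sq D x) < 0).
    { apply Ropp_lt_cancel. rewrite Ropp_0, Ropp_mult_distr_l. apply Rmult_lt_0_compat; lra. }
    apply Ropp_lt_cancel. rewrite Ropp_0, Ropp_mult_distr_r. apply Rmult_lt_0_compat; lra.
Qed.

Lemma G_plus D : 0 < D -> 0 < G D + D * dG D.
Proof.
  intro. unfold G, dG.
  assert (E0 : RInt (fun x => fD D x + D * dfD D x) 0 xm = RInt (fD D) 0 xm + D * RInt (dfD D) 0 xm)
    by (apply RInt_lin; [apply fD_ex|apply dfD_ex]; auto).
  rewrite <- E0.
  apply RInt_gt_0. lra.
  - intros x Hx. unfold fD, dfD. pose proof (sq_pos D x H) as Hs. pose proof (w_ge x).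
    set (s := sq D x) in *.
    assert (Hs2 : s^2 = x^2 + D^2) by apply sq_sqr.
    assert (E : w x * phi s + D * (w x * (phi' s * (D / s))) = w x * (phi s + phi' s * (D^2 / s))) by (field; lra).
    rewrite E. apply Rmult_lt_0_compat. lra.
    pose proof (Hyp s Hs). pose proof (Hneg s Hs).
    assert (D^2 / s < s).
    { apply (Rmult_lt_reg_r s). lra. replace (D^2 / s * s) with (D^2) by (field; lra).
      replace (s * s) with (s^2) by ring. assert (0 < x^2) by (apply pow_lt; lra). lra. }
    assert (phi' s * s < phi' s * (D^2 / s)) by (apply Rmult_lt_gt_compat_neg_l; lra). lra.
  - intros x Hx. apply cont_conv. apply continuity_pt_plus. apply fD_cont; auto.
    apply continuity_pt_mult. apply continuity_pt_const; intro; auto. apply dfD_cont; auto.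
Qed.

Lemma G_pos D : 0 < D -> 0 < G D.
Proof.
  intro. unfold G. apply RInt_gt_0. lra.
  - intros x Hx. unfold fD. pose proof (w_ge x). apply Rmult_lt_0_compat. lra. apply Hpos, sq_pos; auto.
  - intros; apply cont_conv, fD_cont; auto.
Qed.

Lemma G_bound D : 0 < D -> G D <= xm * xm / D.
Proof.
  intro. unfold G. replace (xm * xm / D) with ((xm / D) * (xm - 0)) by (field; lra).
  rewrite <- RInt_cst. apply RInt_le. lra. apply fD_ex; auto. apply ex_RInt_cpt; intro; apply continuity_pt_const; intro; auto.
  intros x Hx. unfold fD. pose proof (sq_pos D x H) as Hs. pose proof (w_ge x). pose proof (w_le x).
  pose proof (Hbd _ Hs). pose proof (Hpos _ Hs). pose proof (sq_geD D x).
  assert (phi (sq D x) <= / sq D x).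
  { apply (Rmult_le_reg_l (sq D x)). lra. rewrite Rinv_r by lra. lra. }
  assert (/ sq D x <= / D) by (apply Rinv_le_contravar; lra).
  assert (w x * phi (sq D x) <= xm * / D).
  { apply Rmult_le_compat; lra. } unfold Rdiv. lra.
Qed.

Lemma G_log D : 0 <= D -> Phi (sq D xm) - Phi (sq D mu) = RInt (fun x => x * phi (sq D x)) mu xm.
Proof.
  intro. symmetry. apply (RInt_deriv (fun x => Phi (sq D x))). auto.
  - intros x Hx. pose proof (sq_pos' D x ltac:(lra)).
    apply (D_eq _ _ (sq D x * phi (sq D x) * (x / sq D x))). field; lra.
    apply (D_comp Phi (fun z => sq D z)). apply sq_derive_x; lra. apply HPhi; auto.
  - intros x Hx. apply continuity_pt_mult. apply continuity_pt_id.
    apply (continuity_pt_comp (fun z => sq D z) phi). apply sq_cont_x. apply phi_cont, sq_pos'; lra.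
Qed.

Lemma G_split D : 0 < D -> G D = RInt (fun x => x * phi (sq D x)) mu xm + mu * RInt (fun x => phi (sq D x)) 0 mu.
Proof.
  intro. unfold G. rewrite <- (RInt_split _ 0 mu xm) by (apply fD_ex; auto).
  assert (ex_RInt (fun x => phi (sq D x)) 0 mu).
  { apply ex_RInt_cpt. intro x. apply (continuity_pt_comp (fun z => sq D z) phi). apply sq_cont_x. apply phi_cont, sq_pos; lra. }
  rewrite <- RInt_scal' by auto.
  rewrite Rplus_comm. f_equal.
  - apply RInt_ext. intros x Hx. rewrite Rmin_left, Rmax_right in Hx by lra. unfold fD. rewrite w_high; lra.
  - apply RInt_ext. intros x Hx. rewrite Rmin_left, Rmax_right in Hx by lra. unfold fD. rewrite w_low; lra.
Qed.

Lemma G_form D : 0 < D -> Phi (sq D xm) - Phi (sq D mu) + mu * RInt (fun x => phi (sq D x)) 0 mu = G D.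
Proof. intro. rewrite G_split, G_log; auto; lra. Qed.
End GenPhi.

Lemma derive_transfer (F G : R -> R) D d : 0 < D -> (forall x, 0 < x -> F x = G x) ->
  is_derive G D d -> is_derive F D d.
Proof.
  intros HD E H. apply (is_derive_ext_loc G F). 2: exact H.
  apply (filter_imp (fun y => 0 < y)). intros; symmetry; apply E; auto. apply locD; auto.
Qed.

Section Case.
Variables (F F' : R -> R) (c : R).
Hypothesis Hc : 0 < c.
Hypothesis HF : forall D, 0 < D -> is_derive F D (F' D).
Hypothesis HF' : forall D, 0 < D -> F' D < 0.

Lemma F_decr a b : 0 < a -> a < b -> F b < F a.
Proof.
  intros. assert (- F a < - F b); [|lra].
  apply (incr_deriv (fun x => - F x) (fun x => - F' x)). auto.
  - intros. apply D_opp, HF. lra.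
  - intros. pose proof (HF' x); lra.
  - intros. pose proof (HF' x); lra.
Qed.

Lemma F_uniq a b : 0 < a -> 0 < b -> F a = F b -> a = b.
Proof.
  intros. destruct (Rtotal_order a b) as [H2|[H2|H2]]; auto.
  pose proof (F_decr a b); lra. pose proof (F_decr b a); lra.
Qed.

Definition gF x := c * x * F x.

Lemma gF_derive x : 0 < x -> is_derive gF x (c * (F x + x * F' x)).
Proof. intro. unfold gF. apply (D_ext (fun x => c * (x * F x))). intro; ring.
  apply D_scal. apply (D_eq _ _ (1 * F x + x * F' x)). ring. apply (D_mul (fun x => x) F). apply D_id. auto. Qed.

Lemma gF_cont x : 0 < x -> continuity_pt gF x.
Proof. intro. apply (D_cont _ _ _ (gF_derive x H)). Qed.

Hypothesis HP : forall D, 0 < D -> 0 < F D + D * F' D.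

Lemma gF_mono x y : 0 < x -> x <= y -> gF x <= gF y.
Proof.
  intros. destruct (Req_dec x y). subst; lra. left.
  apply (incr_deriv gF (fun x => c * (F x + x * F' x))). lra.
  - intros; apply gF_derive; lra.
  - intros. apply Rmult_lt_0_compat; auto. apply HP; lra.
  - intros. left. apply Rmult_lt_0_compat; auto. apply HP; lra.
Qed.

Lemma case_pos (p : R) (u : nat -> R) :
  0 < p -> c * F p = 1 -> 0 < u 0%nat -> (forall n, u (S n) = c * u n * F (u n)) ->
  monotone u /\ Un_cv u p /\ linear_conv u p.
Proof.
  intros Hp Hfix Hu0 Hrec.
  assert (Hrec' : forall n, u (S n) = gF (u n)) by (intro; rewrite Hrec; reflexivity).
  assert (gp : gF p = p) by (unfold gF; replace (c * p * F p) with (p * (c * F p)) by ring; rewrite Hfix; ring).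
  destruct (iter_conv gF p u Hp Hu0 Hrec' gF_mono gp) as [Hm Hcv].
  - intros x Hx. unfold gF. pose proof (F_decr x p ltac:(lra) ltac:(lra)).
    assert (1 < c * F x) by (rewrite <- Hfix; apply Rmult_lt_compat_l; lra).
    replace (c * x * F x) with (x * (c * F x)) by ring. nra.
  - intros x Hx. unfold gF. pose proof (F_decr p x ltac:(lra) ltac:(lra)).
    assert (c * F x < 1) by (rewrite <- Hfix; apply Rmult_lt_compat_l; lra).
    replace (c * x * F x) with (x * (c * F x)) by ring. nra.
  - intros; apply gF_cont; auto.
  - split; auto. split; auto.
    apply (lin_conv gF p (c * (F p + p * F' p))); auto.
    apply is_derive_Reals, gF_derive; auto.
    split. apply Rmult_lt_0_compat; auto.
    replace (c * (F p + p * F' p)) with (c * F p + c * p * F' p) by ring. rewrite Hfix.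
    pose proof (HF' p Hp). assert (0 < c * p) by (apply Rmult_lt_0_compat; auto).
    assert (c * p * F' p < 0). { apply Ropp_lt_cancel. rewrite Ropp_0, Ropp_mult_distr_r. apply Rmult_lt_0_compat; lra. }
    lra.
Qed.

Lemma case_zero (u : nat -> R) :
  (forall D, 0 < D -> 0 < F D) -> (forall D, 0 < D -> c * F D < 1) ->
  0 < u 0%nat -> (forall n, u (S n) = c * u n * F (u n)) ->
  monotone u /\ Un_cv u 0.
Proof.
  intros Hpos Hlt Hu0 Hrec.
  apply (iter_zero gF u Hu0).
  - intro; rewrite Hrec; reflexivity.
  - intros x Hx. unfold gF. pose proof (Hpos x Hx). pose proof (Hlt x Hx).
    replace (c * x * F x) with (x * (c * F x)) by ring. split.
    apply Rmult_lt_0_compat; auto. apply Rmult_lt_0_compat; auto. nra.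
  - intros; apply gF_cont; auto.
Qed.
End Case.

Definition p1 (y : R) := / y.
Definition p1' (y : R) := - / y^2.
Definition P1 (y : R) := y.

Lemma p1_d y : 0 < y -> is_derive p1 y (p1' y).
Proof. intro. unfold p1, p1'. apply (D_eq _ _ (- 1 / y^2)). field; lra. apply D_inv. apply D_id. lra. Qed.
Lemma p1_c y : 0 < y -> continuity_pt p1' y.
Proof. intro. unfold p1'. apply continuity_pt_opp. apply continuity_pt_inv.
  apply continuity_pt_mult. apply continuity_pt_id. apply continuity_pt_mult. apply continuity_pt_id.
  apply continuity_pt_const; intro; auto. simpl; nra. Qed.
Lemma p1_pos y : 0 < y -> 0 < p1 y.
Proof. intro. unfold p1. apply Rinv_0_lt_compat; auto. Qed.
Lemma p1_neg y : 0 < y -> p1' y < 0.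
Proof. intro. unfold p1'. assert (0 < / y^2) by (apply Rinv_0_lt_compat; nra). lra. Qed.
Lemma p1_yp y : 0 < y -> 0 <= p1 y + y * p1' y.
Proof. intro. unfold p1, p1'. replace (/ y + y * - / y ^ 2) with 0 by (field; lra). lra. Qed.
Lemma p1_bd y : 0 < y -> y * p1 y <= 1.
Proof. intro. unfold p1. rewrite Rinv_r; lra. Qed.
Lemma P1_d y : 0 < y -> is_derive P1 y (y * p1 y).
Proof. intro. unfold P1, p1. rewrite Rinv_r by lra. apply D_id. Qed.

Section P1.
Variables (xm lam mu : R).
Hypothesis Hxm : 0 < xm.
Hypothesis Hlam : 0 < lam.
Hypothesis Hmu : 0 < mu.
Hypothesis Hmx : mu <= xm.

Lemma F0_G D : 0 < D -> F0 xm mu D = G mu xm p1 D.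
Proof.
  intro. rewrite <- (G_form mu xm p1 p1' P1) by auto using p1_d, P1_d.
  unfold F0, P1. fold (sq D xm). fold (sq D mu). f_equal. f_equal.
  assert (E : RInt (fun x => p1 (sq D x)) 0 mu = ln (mu + sq D mu) - ln (0 + sq D 0)).
  { apply (RInt_deriv (fun x => ln (x + sq D x))). lra.
    - intros x Hx. pose proof (sq_pos D x H). pose proof (sq_gex D x ltac:(lra)).
      apply (D_eq _ _ (/ (x + sq D x) * (1 + x / sq D x))).
      unfold p1. field. lra.
      apply (D_comp ln (fun x => x + sq D x)). apply (D_add (fun x => x)). apply D_id.
      apply sq_derive_x'. lra.
      apply D_ln. lra.
    - intros x Hx. unfold p1. apply continuity_pt_inv. apply sq_cont_x. pose proof (sq_pos D x H); lra. }
  rewrite E. replace (sq D 0) with D by (unfold sq; replace (0^2+D^2) with (D^2) by ring; rewrite sqrt_pow2; lra).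
  rewrite Rplus_0_l. unfold Rdiv. rewrite ln_mult. rewrite ln_Rinv by auto. ring.
  pose proof (sq_pos D mu H); lra. apply Rinv_0_lt_compat; auto.
Qed.

Lemma F0_derive D : 0 < D -> is_derive (F0 xm mu) D (dG mu xm p1' D).
Proof. intro. apply (derive_transfer _ (G mu xm p1)); auto. apply F0_G.
  apply G_derive; auto using p1_d, p1_c. Qed.

Lemma F0_neg D : 0 < D -> dG mu xm p1' D < 0.
Proof. intro. apply dG_neg; auto using p1_c, p1_neg. Qed.

Lemma F0_plus D : 0 < D -> 0 < F0 xm mu D + D * dG mu xm p1' D.
Proof. intro. rewrite F0_G by auto. apply G_plus; auto using p1_d, p1_c, p1_neg, p1_yp. Qed.

Lemma F0_exists : exists p, 0 < p /\ F0 xm mu p = xm / lam.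
Proof.
  set (a := mu * exp (-(xm/(lam*mu)) - 1)).
  set (b := xm * lam + 1 + mu).
  assert (Ha : 0 < a) by (unfold a; apply Rmult_lt_0_compat; auto; apply exp_pos).
  assert (Hab : a < b).
  { unfold a, b. assert (exp (- (xm / (lam * mu)) - 1) < 1).
    { assert (E1 : exp 0 = 1) by apply exp_0. rewrite <- E1 at 2. apply exp_increasing. assert (0 < xm / (lam*mu)) by (apply Rdiv_lt_0_compat; nra). lra. }
    assert (0 < xm * lam) by nra. nra. }
  assert (Fa : xm / lam < F0 xm mu a).
  { unfold F0.
    assert (sqrt (mu^2 + a^2) <= sqrt (xm^2 + a^2)) by (apply sqrt_le_1_alt; nra).
    assert (Hs : 0 <= sqrt (mu ^ 2 + a ^ 2)) by apply sqrt_pos.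
    assert (ln (mu / a) <= ln ((mu + sqrt (mu ^ 2 + a ^ 2)) / a)).
    { apply ln_le. apply Rdiv_lt_0_compat; lra. unfold Rdiv. apply Rmult_le_compat_r.
      left; apply Rinv_0_lt_compat; lra. lra. }
    assert (Eln : ln (mu / a) = xm / (lam * mu) + 1).
    { unfold Rdiv at 1. rewrite ln_mult by (try apply Rinv_0_lt_compat; lra).
      rewrite ln_Rinv by lra. unfold a. rewrite ln_mult by (auto; apply exp_pos). rewrite ln_exp. lra. }
    assert (Emu : mu * (xm / (lam * mu) + 1) = xm / lam + mu) by (field; lra).
    assert (mu * ln (mu / a) <= mu * ln ((mu + sqrt (mu ^ 2 + a ^ 2)) / a)) by (apply Rmult_le_compat_l; lra).
    assert (mu * ln (mu / a) = xm / lam + mu) by (rewrite Eln; auto). lra. }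
  assert (Fb : F0 xm mu b < xm / lam).
  { rewrite F0_G by lra.
    assert (G mu xm p1 b <= xm * xm / b) by (apply (G_bound mu xm p1 p1'); auto using p1_d, p1_pos, p1_bd; lra).
    assert (xm * xm / b < xm / lam).
    { assert (0 < b) by lra.
      assert (0 < xm * lam) by (apply Rmult_lt_0_compat; lra).
      assert (/ b < / (xm * lam)) by (apply Rinv_lt_contravar; [apply Rmult_lt_0_compat; lra | unfold b; lra]).
      replace (xm / lam) with (xm * xm * / (xm * lam)) by (field; split; apply Rgt_not_eq; lra).
      unfold Rdiv.
      apply Rmult_lt_compat_l. nra. auto. }
    lra. }
  destruct (Ranalysis5.IVT_interv (fun D => xm / lam - F0 xm mu D) a b) as [p [Hp Ep]].
  - intros x Hx. apply continuity_pt_minus. apply continuity_pt_const; intro; auto.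
    apply (D_cont _ _ _ (F0_derive x ltac:(lra))).
  - auto. - simpl. lra. - simpl. lra.
  - exists p. split. lra. simpl in Ep. lra.
Qed.

Lemma part1 : forall u : nat -> R, 0 < u 0%nat ->
     (forall n, u (S n) = lam / xm * u n * F0 xm mu (u n)) ->
     Defs.monotone u /\
     exists us, 0 < us /\ Un_cv u us /\
       xm / lam = F0 xm mu us /\
       (forall D, 0 < D -> xm / lam = F0 xm mu D -> D = us) /\
       linear_conv u us.
Proof.
  intros u Hu0 Hrec. destruct F0_exists as [p [Hp Ep]].
  assert (Hc : 0 < lam / xm) by (apply Rdiv_lt_0_compat; auto).
  assert (Hfix : lam / xm * F0 xm mu p = 1) by (rewrite Ep; field; lra).
  destruct (case_pos (F0 xm mu) (dG mu xm p1') (lam / xm) Hc F0_derive F0_neg F0_plus p u Hp Hfix Hu0 Hrec)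
    as [Hm [Hcv Hl]].
  split; auto. exists p. repeat split; auto.
  intros D HD ED. apply (F_uniq (F0 xm mu) (dG mu xm p1')); auto using F0_derive, F0_neg. lra.
Qed.
End P1.

Lemma Rint_RInt (f : R -> R) (a b : R) : ex_RInt f a b -> Rint f a b = RInt f a b.
Proof.
  intro H. unfold Rint.
  assert (Ex : exists I, exists pr : Riemann_integrable f a b, RiemannInt pr = I).
  { exists (RiemannInt (ex_RInt_Reals_0 f a b H)). eexists; reflexivity. }
  destruct (epsilon_spec (inhabits 0) _ Ex) as [pr E]. rewrite <- E.
  symmetry. apply RInt_Reals.
Qed.

Definition Kint (y : R) := RInt k 0 y.

Lemma H_derive y : is_derive Kint y (k y).
Proof.
  unfold Kint. apply (@is_derive_RInt R_NormedModule k (fun y => RInt k 0 y) 0 y).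
  - apply filter_forall. intro z. apply (@RInt_correct R_CompleteNormedModule). apply ex_RInt_cpt. apply k_cont.
  - apply cont_conv, k_cont.
Qed.

Lemma k_ex a b : ex_RInt k a b.
Proof. apply ex_RInt_cpt. apply k_cont. Qed.

Lemma J_form (mu T : R) : 0 < mu -> 0 < T ->
  Rint (fun xi => / xi * tanh (xi / (2 * T))) 0 mu = Kint (mu / (2 * T)).
Proof.
  intros Hmu HT.
  assert (E : forall xi, 0 < xi -> / xi * tanh (xi / (2 * T)) = scal (/ (2 * T)) (k (/ (2 * T) * xi + 0))).
  { intros xi Hxi. unfold scal; simpl; unfold mult; simpl. rewrite k_eq.
    2:{ assert (0 < / (2*T) * xi) by (apply Rmult_lt_0_compat; [apply Rinv_0_lt_compat|]; lra). lra. }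
    replace (/ (2 * T) * xi + 0) with (xi / (2 * T)) by (field; lra). field. split; lra. }
  assert (Ex : ex_RInt (fun xi => scal (/ (2 * T)) (k (/ (2 * T) * xi + 0))) 0 mu).
  { apply ex_RInt_cpt. intro x. unfold scal; simpl; unfold mult; simpl.
    apply continuity_pt_mult. apply continuity_pt_const; intro; auto.
    apply (continuity_pt_comp (fun x => / (2 * T) * x + 0) k). 
    apply continuity_pt_plus. apply continuity_pt_mult. apply continuity_pt_const; intro; auto.
    apply continuity_pt_id. apply continuity_pt_const; intro; auto. apply k_cont. }
  rewrite Rint_RInt.
  - rewrite (RInt_ext _ (fun xi => scal (/ (2 * T)) (k (/ (2 * T) * xi + 0)))).
    + rewrite (RInt_comp_lin k). unfold Kint. f_equal. ring. field; lra. apply k_ex.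
    + intros x Hx. rewrite Rmin_left, Rmax_right in Hx by lra. apply E; lra.
  - apply (ex_RInt_ext (fun xi => scal (/ (2 * T)) (k (/ (2 * T) * xi + 0)))).
    intros x Hx. rewrite Rmin_left, Rmax_right in Hx by lra. symmetry; apply E; lra. auto.
Qed.

Lemma D_over (c T : R) : 0 < T -> is_derive (fun T => c / (2 * T)) T (- c / (2 * T^2)).
Proof.
  intro. apply (D_ext (fun T => c * / (2 * T))). intro; unfold Rdiv; ring.
  apply (D_eq _ _ (c * (- (2 * 1) / (2 * T)^2))). field; lra.
  apply D_scal. apply (D_inv (fun T => 2 * T)). apply D_scal, D_id. lra.
Qed.

Definition N (y : R) := L y - y * tanh y.
Definition M (y : R) := 2 * L y - y * tanh y.

Lemma N_derive y : is_derive N y (- (y / (cosh y)^2)).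
Proof.
  unfold N. eapply D_eq. 2:{ apply (D_sub L (fun y => y * tanh y)). apply is_derive_L.
    apply (D_mul (fun y => y) tanh). apply D_id. apply is_derive_tanh. }
  field. pose proof (cosh_pos y); lra.
Qed.

Lemma M_derive y : is_derive M y (tanh y - y / (cosh y)^2).
Proof.
  unfold M. eapply D_eq. 2:{ apply (D_sub (fun y => 2 * L y) (fun y => y * tanh y)). apply D_scal, is_derive_L.
    apply (D_mul (fun y => y) tanh). apply D_id. apply is_derive_tanh. }
  field. pose proof (cosh_pos y); lra.
Qed.

Lemma N_mono a b : 0 <= b -> b <= a -> N a <= N b.
Proof.
  intros. assert (- N b <= - N a); [|lra].
  apply (nondecr_deriv (fun y => - N y) (fun y => y / (cosh y)^2)); auto.
  - intros. apply (D_eq _ _ (- - (x / (cosh x)^2))). ring. apply D_opp, N_derive.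
  - intros. apply Rdiv_le_0_compat. lra. pose proof (cosh_pos x). nra.
Qed.

Lemma M_mono a b : 0 <= b -> b <= a -> M b <= M a.
Proof.
  intros. apply (nondecr_deriv M (fun y => tanh y - y / (cosh y)^2)); auto.
  - intros. apply M_derive.
  - intros. pose proof (key_ineq_le x ltac:(lra)). lra.
Qed.

Lemma Hk_pos b : 0 < b -> 0 < Kint b - b * k b.
Proof.
  intro. assert (E : RInt (fun x => k x + (- k b) * 1) 0 b = Kint b + (- k b) * RInt (fun _ => 1) 0 b).
  { apply RInt_lin. apply k_ex. apply ex_RInt_cpt; intro; apply continuity_pt_const; intro; auto. }
  rewrite RInt_cst in E. replace (Kint b - b * k b) with (Kint b + - k b * (1 * (b - 0))) by ring.
  rewrite <- E. apply RInt_gt_0. auto.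
  - intros x Hx. pose proof (k_decr x b ltac:(lra) ltac:(lra)). lra.
  - intros. apply cont_conv. apply continuity_pt_plus. apply k_cont. apply continuity_pt_const; intro; auto.
Qed.

Section P3.
Variables (xm mu : R).
Hypothesis Hxm : 0 < xm.
Hypothesis Hmu : 0 < mu.
Hypothesis Hmx : mu <= xm.

Definition Fce T := 2 * T * (L (xm / (2 * T)) - L (mu / (2 * T))) + mu * Kint (mu / (2 * T)).
Definition Fc' T := 2 * (L (xm / (2 * T)) - L (mu / (2 * T)))
  - (xm * tanh (xm / (2 * T)) - mu * tanh (mu / (2 * T))) / T
  - mu * mu * k (mu / (2 * T)) / (2 * T^2).

Lemma Fc_eq T : 0 < T -> Fc xm mu T = Fce T.
Proof.
  intro. unfold Fc, Fce, L. rewrite ln_div by apply cosh_pos. rewrite J_form by auto. ring.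
Qed.

Lemma Fce_derive T : 0 < T -> is_derive Fce T (Fc' T).
Proof.
  intro. unfold Fce.
  eapply D_eq. 2:{
  apply (D_add (fun T => 2 * T * (L (xm / (2 * T)) - L (mu / (2 * T)))) (fun T => mu * Kint (mu / (2 * T)))).
  apply (D_mul (fun T => 2 * T) (fun T => L (xm / (2 * T)) - L (mu / (2 * T)))).
  apply D_scal, D_id.
  apply (D_sub (fun T => L (xm / (2 * T))) (fun T => L (mu / (2 * T)))).
  apply (D_comp L (fun T => xm / (2 * T))). apply D_over; auto. apply is_derive_L.
  apply (D_comp L (fun T => mu / (2 * T))). apply D_over; auto. apply is_derive_L.
  apply D_scal. apply (D_comp Kint (fun T => mu / (2 * T))). apply D_over; auto. apply H_derive. }
  unfold Fc'. field. lra.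
Qed.

Lemma Fc_derive T : 0 < T -> is_derive (Fc xm mu) T (Fc' T).
Proof. intro. apply (derive_transfer _ Fce); auto. apply Fc_eq. apply Fce_derive; auto. Qed.

Lemma Fc'_neg T : 0 < T -> Fc' T < 0.
Proof.
  intro. unfold Fc'. set (a := xm / (2 * T)). set (b := mu / (2 * T)).
  assert (Hb : 0 < b) by (unfold b; apply Rdiv_lt_0_compat; lra).
  assert (Hba : b <= a) by (unfold a, b; unfold Rdiv; apply Rmult_le_compat_r; [left; apply Rinv_0_lt_compat|]; lra).
  assert (Ea : xm * tanh a / T = 2 * (a * tanh a)) by (unfold a; field; lra).
  assert (Eb : mu * tanh b / T = 2 * (b * tanh b)) by (unfold b; field; lra).
  assert (E : 2 * (L a - L b) - (xm * tanh a - mu * tanh b) / T = 2 * (N a - N b)).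
  { unfold N, a, b. field. lra. }
  rewrite E. pose proof (N_mono a b ltac:(lra) Hba).
  assert (0 < mu * mu * k b / (2 * T ^ 2)).
  { apply Rdiv_lt_0_compat. pose proof (k_pos b ltac:(lra)). apply Rmult_lt_0_compat; nra. nra. }
  lra.
Qed.

Lemma Fc_plus T : 0 < T -> 0 < Fc xm mu T + T * Fc' T.
Proof.
  intro. rewrite Fc_eq by auto. unfold Fce, Fc'. set (a := xm / (2 * T)). set (b := mu / (2 * T)).
  assert (Hb : 0 < b) by (unfold b; apply Rdiv_lt_0_compat; lra).
  assert (Hba : b <= a) by (unfold a, b; unfold Rdiv; apply Rmult_le_compat_r; [left; apply Rinv_0_lt_compat|]; lra).
  assert (E : 2 * T * (L a - L b) + mu * Kint b +
    T * (2 * (L a - L b) - (xm * tanh a - mu * tanh b) / T - mu * mu * k b / (2 * T ^ 2))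
    = 2 * T * (M a - M b) + mu * (Kint b - b * k b)).
  { unfold M, a, b. field. lra. }
  rewrite E. pose proof (M_mono a b ltac:(lra) Hba). pose proof (Hk_pos b Hb).
  assert (0 <= 2 * T * (M a - M b)) by (apply Rmult_le_pos; lra).
  assert (0 < mu * (Kint b - b * k b)) by (apply Rmult_lt_0_compat; lra). lra.
Qed.
End P3.

Lemma part3 (xm lam mu Tc : R) : 0 < xm -> 0 < lam -> 0 < mu -> mu <= xm -> is_Tc xm lam mu Tc ->
  (forall tau : nat -> R, 0 < tau 0%nat ->
     (forall n, tau (S n) = lam / xm * tau n * Fc xm mu (tau n)) ->
     Defs.monotone tau /\ Un_cv tau Tc /\ linear_conv tau Tc).
Proof.
  intros Hxm Hlam Hmu Hmx [HT [ET _]] tau H0 Hrec.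
  assert (Hc : 0 < lam / xm) by (apply Rdiv_lt_0_compat; auto).
  apply (case_pos (Fc xm mu) (Fc' xm mu) (lam / xm) Hc); auto.
  - intros; apply Fc_derive; auto.
  - intros; apply Fc'_neg; auto.
  - intros; apply Fc_plus; auto.
  - rewrite <- ET. field. lra.
Qed.

Section PT.
Variable T : R.
Hypothesis HT : 0 < T.

Definition pT (y : R) := k (y / (2 * T)) / (2 * T).
Definition pT' (y : R) := k' (y / (2 * T)) / (4 * T^2).
Definition PT (y : R) := 2 * T * L (y / (2 * T)).

Lemma D_lin y : is_derive (fun y => y / (2 * T)) y (/ (2 * T)).
Proof. apply (D_ext (fun y => / (2 * T) * y)). intro; unfold Rdiv; ring.
  apply (D_eq _ _ (/ (2 * T) * 1)). ring. apply D_scal, D_id. Qed.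

Lemma z_pos y : 0 < y -> 0 < y / (2 * T).
Proof. intro. apply Rdiv_lt_0_compat; lra. Qed.

Lemma pT_d y : 0 < y -> is_derive pT y (pT' y).
Proof. intro. unfold pT, pT'. apply (D_ext (fun y => / (2 * T) * k (y / (2 * T)))). intro; unfold Rdiv; ring.
  apply (D_eq _ _ (/ (2 * T) * (k' (y / (2 * T)) * / (2 * T)))). field; lra.
  apply D_scal. apply (D_comp k (fun y => y / (2 * T))). apply D_lin. apply k_derive.
  pose proof (z_pos y H); lra. Qed.

Lemma pT_c y : 0 < y -> continuity_pt pT' y.
Proof. intro. unfold pT'. apply continuity_pt_div.
  apply (continuity_pt_comp (fun y => y / (2 * T)) k'). apply (D_cont _ _ _ (D_lin y)).
  apply k'_cont. pose proof (z_pos y H); lra. apply continuity_pt_const; intro; auto. nra. Qed.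

Lemma pT_pos y : 0 <= y -> 0 < pT y.
Proof. intro. unfold pT. apply Rdiv_lt_0_compat. apply k_pos. apply Rdiv_le_0_compat; lra. lra. Qed.

Lemma pT_pos' y : 0 < y -> 0 < pT y.
Proof. intro; apply pT_pos; lra. Qed.

Lemma pT_neg y : 0 < y -> pT' y < 0.
Proof. intro. unfold pT'. pose proof (k'_neg _ (z_pos y H)).
  assert (0 < / (4 * T^2)) by (apply Rinv_0_lt_compat; nra). unfold Rdiv.
  apply Ropp_lt_cancel. rewrite Ropp_0, Ropp_mult_distr_l. apply Rmult_lt_0_compat; lra. Qed.

Lemma pT_yp y : 0 < y -> 0 <= pT y + y * pT' y.
Proof. intro. unfold pT, pT'. set (z := y / (2 * T)).
  assert (z <> 0) by (pose proof (z_pos y H); unfold z; lra).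
  replace (k z / (2 * T) + y * (k' z / (4 * T ^ 2))) with ((k z + z * k' z) / (2 * T)) by (unfold z; field; lra).
  rewrite k_plus by auto. apply Rdiv_le_0_compat. left; apply Rinv_0_lt_compat. pose proof (cosh_pos z); nra. lra. Qed.

Lemma pT_bd y : 0 < y -> y * pT y <= 1.
Proof. intro. unfold pT. set (z := y / (2 * T)).
  assert (z <> 0) by (pose proof (z_pos y H); unfold z; lra).
  replace (y * (k z / (2 * T))) with (z * k z) by (unfold z; field; lra).
  rewrite k_tanh by auto. left; apply tanh_lt1. Qed.

Lemma pT_tanh y : 0 < y -> pT y = tanh (y / (2 * T)) / y.
Proof. intro. unfold pT. rewrite k_eq by (pose proof (z_pos y H); lra). field. split; lra. Qed.

Lemma PT_d y : 0 < y -> is_derive PT y (y * pT y).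
Proof. intro. unfold PT. rewrite pT_tanh by auto.
  apply (D_eq _ _ (2 * T * (tanh (y / (2 * T)) * / (2 * T)))). field; lra.
  apply D_scal. apply (D_comp L (fun y => y / (2 * T))). apply D_lin. apply is_derive_L. Qed.

Lemma pT_cont y : continuity_pt pT y.
Proof. unfold pT. apply continuity_pt_div. apply (continuity_pt_comp (fun y => y / (2 * T)) k).
  apply (D_cont _ _ _ (D_lin y)). apply k_cont. apply continuity_pt_const; intro; auto. lra. Qed.

Lemma pT_decr a b : 0 <= a -> a <= b -> pT b <= pT a.
Proof. intros. destruct (Req_dec a b). subst; lra. unfold pT. unfold Rdiv at 1 3.
  apply Rmult_le_compat_r. left; apply Rinv_0_lt_compat; lra.
  left; apply k_decr. apply Rdiv_le_0_compat; lra. unfold Rdiv; apply Rmult_lt_compat_r.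
  apply Rinv_0_lt_compat; lra. lra. Qed.
End PT.

Lemma pt_bound T D x : 0 < T -> 0 < D -> 0 < x -> pT T x - pT T (sq D x) <= D^2 / (T * (x + D)^2).
Proof.
  intros HT HD Hx. pose proof (sq_pos D x HD) as Hs. pose proof (sq_gex D x ltac:(lra)) as Hsx.
  pose proof (sq_sqr D x) as Hs2. set (s := sq D x) in *.
  rewrite !pT_tanh by lra.
  set (t := tanh (x / (2 * T))). set (t' := tanh (s / (2 * T))).
  assert (Ht0 : 0 <= t) by (apply tanh_nonneg; apply Rdiv_le_0_compat; lra).
  assert (Htx : t <= x / (2 * T)) by (left; apply tanh_lt_id; apply Rdiv_lt_0_compat; lra).
  assert (Htt : t <= t').
  { destruct (Req_dec x s). unfold t, t'. rewrite H. lra. left. apply tanh_incr.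
    unfold Rdiv; apply Rmult_lt_compat_r. apply Rinv_0_lt_compat; lra. lra. }
  assert (S1 : t / x - t' / s <= t * (s - x) / (x * s)).
  { assert (t / s <= t' / s) by (unfold Rdiv; apply Rmult_le_compat_r; [left; apply Rinv_0_lt_compat|]; lra).
    replace (t * (s - x) / (x * s)) with (t / x - t / s) by (field; lra). lra. }
  assert (S2 : t * (s - x) / (x * s) <= (s - x) / (2 * T * s)).
  { replace ((s - x) / (2 * T * s)) with ((x / (2 * T)) * (s - x) / (x * s)) by (field; lra).
    unfold Rdiv. apply Rmult_le_compat_r. left; apply Rinv_0_lt_compat; nra.
    apply Rmult_le_compat_r; lra. }
  assert (S3 : (s - x) / (2 * T * s) <= D^2 / (T * (x + D)^2)).
  { assert (Hxd : 0 < (x + D)^2) by nra.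
    apply (Rmult_le_reg_r (2 * T * s * (x + D)^2)). repeat apply Rmult_lt_0_compat; lra.
    replace ((s - x) / (2 * T * s) * (2 * T * s * (x + D) ^ 2)) with ((s - x) * (x + D)^2) by (field; lra).
    replace (D ^ 2 / (T * (x + D) ^ 2) * (2 * T * s * (x + D) ^ 2)) with (2 * s * D^2) by (field; lra).
    assert (E : (s - x) * (s + x) = D^2) by nra.
    assert ((x + D)^2 <= 2 * s * (s + x)) by nra.
    assert ((s - x) * (x + D)^2 <= (s - x) * (2 * s * (s + x))) by (apply Rmult_le_compat_l; lra).
    nra. }
  lra.
Qed.

Lemma B_int T D a b : 0 < T -> 0 < D -> 0 <= a <= b -> RInt (fun x => D^2 / (T * (x + D)^2)) a b <= D / T.
Proof.
  intros HT HD Hab.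
  rewrite (RInt_deriv (fun x => - (D^2 / T) / (x + D))). 
  - assert (0 < D^2 / T / (b + D)) by (apply Rdiv_lt_0_compat; [apply Rdiv_lt_0_compat; nra|lra]).
    assert (D^2 / T / (a + D) <= D / T).
    { replace (D / T) with (D^2 / T / D) by (field; lra). unfold Rdiv at 1 3.
      apply Rmult_le_compat_l. left; apply Rdiv_lt_0_compat; nra. apply Rinv_le_contravar; lra. }
    lra.
  - lra.
  - intros x Hx. apply (D_eq _ _ (- (D^2 / T) * (- 1 / (x + D)^2))). field; split; lra.
    apply (D_ext (fun x => - (D^2 / T) * / (x + D))). intro; unfold Rdiv; ring.
    apply D_scal. apply (D_eq _ _ (- (1 + 0) / (x + D)^2)). field; lra.
    apply (D_inv (fun x => x + D)). apply (D_add (fun x => x) (fun _ => D)). apply D_id. apply D_const. lra.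
  - intros x Hx. apply continuity_pt_div. apply continuity_pt_const; intro; auto.
    apply continuity_pt_mult. apply continuity_pt_const; intro; auto.
    apply continuity_pt_mult. apply continuity_pt_plus. apply continuity_pt_id. apply continuity_pt_const; intro; auto.
    apply continuity_pt_mult. apply continuity_pt_plus. apply continuity_pt_id. apply continuity_pt_const; intro; auto.
    apply continuity_pt_const; intro; auto. cbv beta. apply Rgt_not_eq. 
    assert (0 < x + D) by lra. apply Rmult_lt_0_compat. lra. apply pow_lt; lra.
Qed.

Section P2.
Variables (xm lam mu : R).
Hypothesis Hxm : 0 < xm.
Hypothesis Hlam : 0 < lam.
Hypothesis Hmu : 0 < mu.
Hypothesis Hmx : mu <= xm.

Lemma FT_split T D : 0 < T -> 0 < D -> FT xm mu T D =
  RInt (fun x => x * pT T (sq D x)) mu xm + mu * RInt (fun x => pT T (sq D x)) 0 mu.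
Proof.
  intros HT HD. rewrite <- (G_log mu xm (pT T) (pT' T) (PT T)) by (auto using pT_d, PT_d; lra).
  unfold FT. rewrite ln_div by apply cosh_pos. unfold PT, L, sq.
  assert (Ex : ex_RInt (fun x => pT T (sq D x)) 0 mu).
  { apply ex_RInt_cpt. intro. apply (continuity_pt_comp (fun x => sq D x) (pT T)). apply sq_cont_x. apply pT_cont; auto. }
  rewrite Rint_RInt.
  - rewrite (RInt_ext _ (fun x => pT T (sq D x))). unfold sq. ring.
    intros x _. rewrite pT_tanh; auto. apply sq_pos; auto.
  - apply (ex_RInt_ext (fun x => pT T (sq D x))). intros x _. rewrite pT_tanh; auto. apply sq_pos; auto. auto.
Qed.

Lemma FT_G T D : 0 < T -> 0 < D -> FT xm mu T D = G mu xm (pT T) D.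
Proof. intros. rewrite FT_split, (G_split mu xm (pT T) (pT' T)); auto using pT_d. Qed.

Lemma Fc_split T : 0 < T -> Fc xm mu T =
  RInt (fun x => x * pT T x) mu xm + mu * RInt (pT T) 0 mu.
Proof.
  intro HT. rewrite Fc_eq by auto. unfold Fce.
  pose proof (G_log mu xm (pT T) (pT' T) (PT T) Hmu Hmx (pT_d T HT) (PT_d T HT) 0 ltac:(lra)) as E.
  rewrite !sq_0 in E by lra. unfold PT in E.
  rewrite (RInt_ext (fun x => x * pT T (sq 0 x)) (fun x => x * pT T x)) in E.
  2:{ intros x Hx. rewrite Rmin_left, Rmax_right in Hx by lra. rewrite sq_0 by lra. auto. }
  rewrite <- E.
  assert (EH : Kint (mu / (2 * T)) = RInt (pT T) 0 mu).
  { unfold Kint. rewrite <- (RInt_ext (fun y => scal (/ (2 * T)) (k (/ (2 * T) * y + 0))) (pT T) 0 mu).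
    - rewrite (RInt_comp_lin k). replace (/ (2 * T) * 0 + 0) with 0 by ring.
      replace (/ (2 * T) * mu + 0) with (mu / (2 * T)) by (field; lra). reflexivity. apply k_ex.
    - intros x _. unfold pT, scal; simpl; unfold mult; simpl. replace (/ (2 * T) * x + 0) with (x / (2 * T)) by (field; lra).
      unfold Rdiv; ring. }
  rewrite EH. ring.
Qed.

Lemma RInt_diff (f g : R -> R) a b : ex_RInt f a b -> ex_RInt g a b ->
  RInt f a b - RInt g a b = RInt (fun x => f x + (-1) * g x) a b.
Proof. intros. rewrite RInt_lin; auto. ring. Qed.

Lemma FT_le_Fc T D : 0 < T -> 0 < D -> FT xm mu T D <= Fc xm mu T.
Proof.
  intros HT HD. rewrite FT_split, Fc_split by auto.
  assert (C1 : forall x, continuity_pt (fun x => pT T (sq D x)) x).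
  { intro. apply (continuity_pt_comp (fun x => sq D x) (pT T)). apply sq_cont_x. apply pT_cont; auto. }
  assert (RInt (fun x => x * pT T (sq D x)) mu xm <= RInt (fun x => x * pT T x) mu xm).
  { apply RInt_le. auto.
    apply ex_RInt_cpt; intro; apply continuity_pt_mult; [apply continuity_pt_id| apply C1].
    apply ex_RInt_cpt; intro; apply continuity_pt_mult; [apply continuity_pt_id| apply pT_cont; auto].
    intros x Hx. apply Rmult_le_compat_l. lra. apply pT_decr; auto. lra. apply sq_gex; lra. }
  assert (RInt (fun x => pT T (sq D x)) 0 mu <= RInt (pT T) 0 mu).
  { apply RInt_le. lra. apply ex_RInt_cpt; auto. apply ex_RInt_cpt; intro; apply pT_cont; auto.
    intros x Hx. apply pT_decr; auto. lra. apply sq_gex; lra. }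
  assert (mu * RInt (fun x => pT T (sq D x)) 0 mu <= mu * RInt (pT T) 0 mu) by (apply Rmult_le_compat_l; lra).
  lra.
Qed.

Lemma FT_ge_Fc T D : 0 < T -> 0 < D -> Fc xm mu T - 2 * xm * D / T <= FT xm mu T D.
Proof.
  intros HT HD. rewrite FT_split, Fc_split by auto.
  assert (C1 : forall x, continuity_pt (fun x => pT T (sq D x)) x).
  { intro. apply (continuity_pt_comp (fun x => sq D x) (pT T)). apply sq_cont_x. apply pT_cont; auto. }
  assert (CB : forall x, 0 <= x -> continuity_pt (fun x => D^2 / (T * (x + D)^2)) x).
  { intros x Hx. apply continuity_pt_div. apply continuity_pt_const; intro; auto.
    apply continuity_pt_mult. apply continuity_pt_const; intro; auto.
    apply continuity_pt_mult. apply continuity_pt_plus. apply continuity_pt_id. apply continuity_pt_const; intro; auto.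
    apply continuity_pt_mult. apply continuity_pt_plus. apply continuity_pt_id. apply continuity_pt_const; intro; auto.
    apply continuity_pt_const; intro; auto. cbv beta. apply Rgt_not_eq.
    assert (0 < x + D) by lra. apply Rmult_lt_0_compat. lra. apply pow_lt; lra. }
  assert (A1 : RInt (fun x => x * pT T x) mu xm - RInt (fun x => x * pT T (sq D x)) mu xm <= xm * (D / T)).
  { rewrite RInt_diff.
    2: apply ex_RInt_cpt; intro; apply continuity_pt_mult; [apply continuity_pt_id| apply pT_cont; auto].
    2: apply ex_RInt_cpt; intro; apply continuity_pt_mult; [apply continuity_pt_id| apply C1].
    apply (Rle_trans _ (RInt (fun x => xm * (D^2 / (T * (x + D)^2))) mu xm)).
    - apply RInt_le. auto.
      apply ex_RInt_cpt; intro; apply continuity_pt_plus; [apply continuity_pt_mult; [apply continuity_pt_id| apply pT_cont; auto]|].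
      apply continuity_pt_mult. apply continuity_pt_const; intro; auto. apply continuity_pt_mult; [apply continuity_pt_id| apply C1].
      apply ex_RInt_cpt'. auto. intros. apply continuity_pt_mult. apply continuity_pt_const; intro; auto. apply CB; lra.
      intros x Hx. pose proof (pt_bound T D x HT HD ltac:(lra)).
      assert (0 <= D^2 / (T * (x + D)^2)) by (apply Rdiv_le_0_compat; [nra| apply Rmult_lt_0_compat; nra]).
      assert (x * (pT T x - pT T (sq D x)) <= x * (D ^ 2 / (T * (x + D) ^ 2))) by (apply Rmult_le_compat_l; lra).
      assert (x * (D ^ 2 / (T * (x + D) ^ 2)) <= xm * (D ^ 2 / (T * (x + D) ^ 2))) by (apply Rmult_le_compat_r; lra).
      lra.
    - rewrite RInt_scal'. apply Rmult_le_compat_l. lra. apply B_int; auto; lra.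
      apply ex_RInt_cpt'. auto. intros; apply CB; lra. }
  assert (A2 : RInt (pT T) 0 mu - RInt (fun x => pT T (sq D x)) 0 mu <= D / T).
  { rewrite RInt_diff.
    2: apply ex_RInt_cpt; intro; apply pT_cont; auto.
    2: apply ex_RInt_cpt; auto.
    apply (Rle_trans _ (RInt (fun x => D^2 / (T * (x + D)^2)) 0 mu)).
    - apply RInt_le. lra.
      apply ex_RInt_cpt; intro; apply continuity_pt_plus. apply pT_cont; auto.
      apply continuity_pt_mult. apply continuity_pt_const; intro; auto. apply C1.
      apply ex_RInt_cpt'. lra. intros; apply CB; lra.
      intros x Hx. pose proof (pt_bound T D x HT HD ltac:(lra)). lra.
    - apply B_int; auto; lra. }
  assert (mu * (RInt (pT T) 0 mu - RInt (fun x => pT T (sq D x)) 0 mu) <= xm * (D / T)).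
  { apply (Rle_trans _ (mu * (D / T))). apply Rmult_le_compat_l; lra.
    apply Rmult_le_compat_r. left; apply Rdiv_lt_0_compat; lra. lra. }
  assert (E2 : 2 * xm * D / T = xm * (D / T) + xm * (D / T)) by (field; lra).
  rewrite E2. lra.
Qed.
End P2.

Lemma small_bound xm lam a : 0 < xm -> 0 < lam -> 0 <= a -> xm * xm / (xm * lam + 1 + a) < xm / lam.
Proof.
  intros. set (b := xm * lam + 1 + a).
  assert (0 < xm * lam) by (apply Rmult_lt_0_compat; lra).
  assert (0 < b) by (unfold b; lra).
  assert (/ b < / (xm * lam)) by (apply Rinv_lt_contravar; [apply Rmult_lt_0_compat; lra | unfold b; lra]).
  replace (xm / lam) with (xm * xm * / (xm * lam)) by (field; split; apply Rgt_not_eq; lra).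
  unfold Rdiv. apply Rmult_lt_compat_l. nra. auto.
Qed.

Section P2b.
Variables (xm lam mu Tc : R).
Hypothesis Hxm : 0 < xm.
Hypothesis Hlam : 0 < lam.
Hypothesis Hmu : 0 < mu.
Hypothesis Hmx : mu <= xm.
Hypothesis HTc : is_Tc xm lam mu Tc.

Lemma FT_derive T D : 0 < T -> 0 < D -> is_derive (FT xm mu T) D (dG mu xm (pT' T) D).
Proof. intros. apply (derive_transfer _ (G mu xm (pT T))); auto. intros; apply FT_G; auto.
  apply G_derive; auto using pT_d, pT_c. Qed.

Lemma FT_neg T D : 0 < T -> 0 < D -> dG mu xm (pT' T) D < 0.
Proof. intros. apply dG_neg; auto using pT_c, pT_neg. Qed.

Lemma FT_plus T D : 0 < T -> 0 < D -> 0 < FT xm mu T D + D * dG mu xm (pT' T) D.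
Proof. intros. rewrite FT_G by auto. apply G_plus; auto using pT_d, pT_c, pT_neg, pT_yp. Qed.

Lemma FT_pos T D : 0 < T -> 0 < D -> 0 < FT xm mu T D.
Proof. intros. rewrite FT_G by auto. apply (G_pos mu xm (pT T) (pT' T)); auto using pT_d, pT_pos'. Qed.

Lemma FT_bound T D : 0 < T -> 0 < D -> FT xm mu T D <= xm * xm / D.
Proof. intros. rewrite FT_G by auto. apply (G_bound mu xm (pT T) (pT' T)); auto using pT_d, pT_pos', pT_bd. Qed.

Lemma Fc_decr a b : 0 < a -> a < b -> Fc xm mu b < Fc xm mu a.
Proof. intros. apply (F_decr (Fc xm mu) (Fc' xm mu)); auto.
  intros; apply Fc_derive; auto. intros; apply Fc'_neg; auto. Qed.

Lemma part2 : forall T, 0 < T -> forall u : nat -> R, 0 < u 0%nat ->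
     (forall n, u (S n) = lam / xm * u n * FT xm mu T (u n)) ->
     Defs.monotone u /\
     exists us, 0 <= us /\ Un_cv u us /\
       (T < Tc ->
          0 < us /\ xm / lam = FT xm mu T us /\
          (forall D, 0 < D -> xm / lam = FT xm mu T D -> D = us) /\
          linear_conv u us) /\
       (Tc <= T ->
          us = 0 /\ (forall D, 0 < D -> xm / lam <> FT xm mu T D)).
Proof.
  intros T HT u Hu0 Hrec. destruct HTc as [HTc0 [ETc _]].
  assert (Hc : 0 < lam / xm) by (apply Rdiv_lt_0_compat; auto).
  destruct (Rlt_le_dec T Tc) as [Hlt|Hge].
  - assert (HFc : xm / lam < Fc xm mu T) by (rewrite ETc; apply Fc_decr; auto).
    set (del := Fc xm mu T - xm / lam).
    set (a := del * T / (4 * xm)).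
    assert (Ha : 0 < a) by (unfold a, del; apply Rdiv_lt_0_compat; [apply Rmult_lt_0_compat|]; lra).
    set (b := xm * lam + 1 + a).
    assert (Hab : a < b) by (unfold b; assert (0 < xm * lam) by (apply Rmult_lt_0_compat; lra); lra).
    assert (Fa : xm / lam < FT xm mu T a).
    { pose proof (FT_ge_Fc xm mu Hxm Hmu Hmx T a HT Ha).
      assert (2 * xm * a / T = del / 2) by (unfold a; field; lra). unfold del in *. lra. }
    assert (Fb : FT xm mu T b < xm / lam).
    { pose proof (FT_bound T b HT ltac:(lra)). pose proof (small_bound xm lam a Hxm Hlam ltac:(lra)).
      fold b in H0. lra. }
    destruct (IVT_interv (fun D => xm / lam - FT xm mu T D) a b) as [p [Hp Ep]].
    + intros x Hx. apply continuity_pt_minus. apply continuity_pt_const; intro; auto.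
      apply (D_cont _ _ _ (FT_derive T x HT ltac:(lra))).
    + auto. + simpl. lra. + simpl. lra.
    + simpl in Ep. assert (Hp0 : 0 < p) by lra.
      assert (Hfix : lam / xm * FT xm mu T p = 1) by (replace (FT xm mu T p) with (xm / lam) by lra; field; lra).
      destruct (case_pos (FT xm mu T) (dG mu xm (pT' T)) (lam / xm) Hc (fun D HD => FT_derive T D HT HD) (fun D HD => FT_neg T D HT HD) (fun D HD => FT_plus T D HT HD) p u Hp0 Hfix Hu0 Hrec)
        as [Hm [Hcv Hl]].
      assert (Hu : forall D, 0 < D -> xm / lam = FT xm mu T D -> D = p).
      { intros D HD ED. apply (F_uniq (FT xm mu T) (dG mu xm (pT' T)) (fun D HD => FT_derive T D HT HD) (fun D HD => FT_neg T D HT HD)); auto. lra. }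
      split; auto. exists p. split. lra. split; auto. split.
      * intros _. split; auto. split. lra. split; auto.
      * intros. lra.
  - assert (HFc : Fc xm mu T <= xm / lam).
    { rewrite ETc. destruct (Req_dec T Tc). subst; lra. left; apply Fc_decr; lra. }
    assert (Hlt1 : forall D, 0 < D -> FT xm mu T D < xm / lam).
    { intros D HD. pose proof (FT_le_Fc xm mu Hxm Hmu Hmx T (D/2) HT ltac:(lra)).
      pose proof (F_decr (FT xm mu T) (dG mu xm (pT' T)) (fun D HD => FT_derive T D HT HD) (fun D HD => FT_neg T D HT HD) (D/2) D ltac:(lra) ltac:(lra)).
      lra. }
    destruct (case_zero (FT xm mu T) (dG mu xm (pT' T)) (lam / xm) Hc (fun D HD => FT_derive T D HT HD) u (fun D HD => FT_pos T D HT HD)) as [Hm Hcv]; auto.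
    + intros D HD. pose proof (Hlt1 D HD). apply (Rmult_lt_reg_r (xm / lam)).
      apply Rdiv_lt_0_compat; lra. replace (lam / xm * FT xm mu T D * (xm / lam)) with (FT xm mu T D) by (field; lra). lra.
    + split; auto. exists 0. split. lra. split; auto. split.
      * intros; lra.
      * intros _. split; auto. intros D HD E. pose proof (Hlt1 D HD). lra.
Qed.
End P2b.

Require Import Defs.
Open Scope R_scope.

Theorem theorem2 (xm lam mu Tc : R)
  (Hxm : 0 < xm) (Hlam : 0 < lam) (Hmu : 0 < mu <= xm)
  (HTc : is_Tc xm lam mu Tc) :
  (* (i) *)
  (forall u : nat -> R, 0 < u 0%nat ->
     (forall n, u (S n) = lam / xm * u n * F0 xm mu (u n)) ->
     monotone u /\
     exists us, 0 < us /\ Un_cv u us /\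
       xm / lam = F0 xm mu us /\
       (forall D, 0 < D -> xm / lam = F0 xm mu D -> D = us) /\
       linear_conv u us)
  /\
  (* (ii) *)
  (forall T, 0 < T -> forall u : nat -> R, 0 < u 0%nat ->
     (forall n, u (S n) = lam / xm * u n * FT xm mu T (u n)) ->
     monotone u /\
     exists us, 0 <= us /\ Un_cv u us /\
       (T < Tc ->
          0 < us /\ xm / lam = FT xm mu T us /\
          (forall D, 0 < D -> xm / lam = FT xm mu T D -> D = us) /\
          linear_conv u us) /\
       (Tc <= T ->
          us = 0 /\ (forall D, 0 < D -> xm / lam <> FT xm mu T D)))
  /\
  (* (iii) *)
  (forall tau : nat -> R, 0 < tau 0%nat ->
     (forall n, tau (S n) = lam / xm * tau n * Fc xm mu (tau n)) ->
     monotone tau /\ Un_cv tau Tc /\ linear_conv tau Tc).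

Proof.
  split; [|split].
  - apply part1; lra.
  - apply part2; lra || auto.
  - apply part3; lra || auto.
Qed.
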